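(* Let $\varphi\in C^2(\overline{H^2})\cap C^\infty(H^2)$ with $\varphi\ge 0$, $\varphi\not\equiv0$, $\varphi(0,y)=0$ for all $y$, and $\varphi_{xx}+\varphi_{yy}-x^{-1}\varphi_x=0$ on $H^2$. Then the function $f=x^{-2}\varphi$ (defined on $H^2$) extends to a function in $C^0(\overline{H^2})\cap C^\infty(H^2)$, this extension satisfies $f_{xx}+f_{yy}+3x^{-1}f_x=0$ on $H^2$, and $f>0$ everywhere on $\overline{H^2}$ (including on $\{x=0\}$).
   Context: $H^2=\{(x,y)\in\mathbb{R}^2: x>0\}$ is the open right half-plane and $\overline{H^2}=\{x\ge0\}$ its closure. *)

(* Defs.v *)
(* classical reals. Functions on R^2 are curried R -> R -> R;
   H^2 = {x > 0}, its closure = {x >= 0}. *)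
From Stdlib Require Import Reals Lra.
Open Scope R_scope.

Definition cont_at2 (f : R -> R -> R) (x y : R) : Prop :=
  forall eps, 0 < eps -> exists d, 0 < d /\
    forall x' y', Rabs (x' - x) < d -> Rabs (y' - y) < d ->
      Rabs (f x' y' - f x y) < eps.

Definition cont_H (f : R -> R -> R) : Prop :=
  forall x y, 0 < x -> cont_at2 f x y.

Definition cont_Hbar (f : R -> R -> R) : Prop :=
  forall x y, 0 <= x ->
    forall eps, 0 < eps -> exists d, 0 < d /\
      forall x' y', 0 <= x' -> Rabs (x' - x) < d -> Rabs (y' - y) < d ->
        Rabs (f x' y' - f x y) < eps.

Definition pdx_H (f g : R -> R -> R) : Prop :=
  forall x y, 0 < x -> derivable_pt_lim (fun t => f t y) x (g x y).
Definition pdy_H (f g : R -> R -> R) : Prop :=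
  forall x y, 0 < x -> derivable_pt_lim (fun t => f x t) y (g x y).

Fixpoint Ck_H (k : nat) (f : R -> R -> R) : Prop :=
  cont_H f /\
  match k with
  | O => True
  | S k' => exists gx gy, pdx_H f gx /\ pdy_H f gy /\ Ck_H k' gx /\ Ck_H k' gy
  end.

Definition Cinf_H (f : R -> R -> R) : Prop := forall k, Ck_H k f.

(* C^2 on the closed half-plane: f and all its partial derivatives of order
   <= 2 (taken in H^2) extend continuously to the closure {x >= 0}. *)
Definition C2_Hbar (f : R -> R -> R) : Prop :=
  cont_Hbar f /\
  exists fx fy fxx fxy fyx fyy,
    pdx_H f fx /\ pdy_H f fy /\
    pdx_H fx fxx /\ pdy_H fx fxy /\ pdx_H fy fyx /\ pdy_H fy fyy /\
    cont_Hbar fx /\ cont_Hbar fy /\ cont_Hbar fxx /\ cont_Hbar fxy /\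
    cont_Hbar fyx /\ cont_Hbar fyy.

(* Main.v *)
Require Import Defs.
From Stdlib Require Import Reals Lra.
From Coquelicot Require Import Coquelicot.
Open Scope R_scope.

Lemma cont_at2_iff f x y : cont_at2 f x y <-> continuity_2d_pt f x y.
Proof.
  split.
  - intros H eps. destruct (H eps (cond_pos eps)) as [d [Hd H1]].
    exists (mkposreal d Hd). intros u v Hu Hv. apply H1; assumption.
  - intros H eps Heps. destruct (H (mkposreal eps Heps)) as [d H1].
    exists d. split; [apply cond_pos|]. intros u v Hu Hv. apply H1; assumption.
Qed.

Lemma c2_slice1 g x y : continuity_2d_pt g x y -> continuity_pt (fun t => g t y) x.
Proof.
  intros H eps Heps. destruct (H (mkposreal eps Heps)) as [d H1].
  exists d. split; [apply cond_pos|]. intros t [_ Ht]. simpl in *.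
  unfold R_dist in *. apply H1; [assumption|]. replace (y - y) with 0 by ring.
  rewrite Rabs_R0; apply cond_pos.
Qed.

Lemma c2_slice2 g x y : continuity_2d_pt g x y -> continuity_pt (fun t => g x t) y.
Proof.
  intros H eps Heps. destruct (H (mkposreal eps Heps)) as [d H1].
  exists d. split; [apply cond_pos|]. intros t [_ Ht]. simpl in *.
  unfold R_dist in *. apply H1; [|assumption]. replace (x - x) with 0 by ring.
  rewrite Rabs_R0; apply cond_pos.
Qed.

Lemma c2_of_1 (g : R -> R) x y : continuity_pt g x -> continuity_2d_pt (fun u v => g u) x y.
Proof.
  intros H eps. destruct (H eps (cond_pos eps)) as [d [Hd H1]].
  exists (mkposreal d Hd). intros u v Hu Hv. simpl in *.
  destruct (Req_dec u x) as [->|Hne].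
  - replace (g x - g x) with 0 by ring. rewrite Rabs_R0. apply cond_pos.
  - apply (H1 u). split; [split; [exact I|intro; apply Hne; symmetry; assumption]|]. exact Hu.
Qed.

Lemma c2_of_2 (g : R -> R) x y : continuity_pt g y -> continuity_2d_pt (fun u v => g v) x y.
Proof.
  intros H eps. destruct (H eps (cond_pos eps)) as [d [Hd H1]].
  exists (mkposreal d Hd). intros u v Hu Hv. simpl in *.
  destruct (Req_dec v y) as [->|Hne].
  - replace (g y - g y) with 0 by ring. rewrite Rabs_R0. apply cond_pos.
  - apply (H1 v). split; [split; [exact I|intro; apply Hne; symmetry; assumption]|]. exact Hv.
Qed.

Lemma contHbar_comp2 h A B r t :
  cont_Hbar h -> continuity_2d_pt A r t -> continuity_2d_pt B r t ->
  (forall u v, 0 <= A u v) ->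
  continuity_2d_pt (fun u v => h (A u v) (B u v)) r t.
Proof.
  intros Hh HA HB Hpos eps.
  destruct (Hh (A r t) (B r t) (Hpos r t) eps (cond_pos eps)) as [d [Hd H1]].
  destruct (HA (mkposreal d Hd)) as [d1 HA1].
  destruct (HB (mkposreal d Hd)) as [d2 HB1].
  exists (mkposreal _ (Rmin_pos _ _ (cond_pos d1) (cond_pos d2))).
  intros u v Hu Hv. simpl in Hu, Hv.
  apply H1; [apply Hpos| apply HA1 | apply HB1];
   (eapply Rlt_le_trans; [eassumption| first [apply Rmin_l | apply Rmin_r]]).
Qed.

Lemma contH_comp2 h A B r t :
  (forall x y, 0 < x -> continuity_2d_pt h x y) -> continuity_2d_pt A r t -> continuity_2d_pt B r t ->
  0 < A r t ->
  continuity_2d_pt (fun u v => h (A u v) (B u v)) r t.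
Proof.
  intros Hh HA HB Hpos eps.
  destruct (Hh (A r t) (B r t) Hpos eps) as [d H1].
  destruct (HA d) as [d1 HA1].
  destruct (HB d) as [d2 HB1].
  exists (mkposreal _ (Rmin_pos _ _ (cond_pos d1) (cond_pos d2))).
  intros u v Hu Hv. simpl in Hu, Hv.
  apply H1; [ apply HA1 | apply HB1];
   (eapply Rlt_le_trans; [eassumption| first [apply Rmin_l | apply Rmin_r]]).
Qed.

Lemma between_abs x u t : Rmin x u <= t <= Rmax x u -> Rabs (t - x) <= Rabs (u - x).
Proof.
  unfold Rmin, Rmax. intros Ht. destruct (Rle_dec x u).
  - rewrite (Rabs_right (u - x)) by lra. rewrite Rabs_right by lra. lra.
  - rewrite (Rabs_left (u - x)) by lra. unfold Rabs. destruct (Rcase_abs (t - x)); lra.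
Qed.

Lemma diff_of_partials f fx fy x y :
  locally_2d (fun u v => derivable_pt_lim (fun t => f t v) u (fx u v)) x y ->
  continuity_2d_pt fx x y ->
  derivable_pt_lim (fun t => f x t) y (fy x y) ->
  differentiable_pt_lim f x y (fx x y) (fy x y).
Proof.
  intros [d0 Hd0] Hc Hy eps.
  assert (He2 : 0 < eps / 2) by (generalize (cond_pos eps); lra).
  destruct (Hc (mkposreal _ He2)) as [d1 Hd1].
  destruct (Hy _ He2) as [d2 Hd2].
  set (d := Rmin d0 (Rmin d1 d2)).
  assert (Hdpos : 0 < d) by (unfold d; repeat apply Rmin_pos; try apply cond_pos).
  exists (mkposreal d Hdpos). intros u v Hu Hv. simpl in Hu, Hv.
  assert (Hu0 : Rabs (u - x) < d0) by (apply Rlt_le_trans with d; [exact Hu|apply Rmin_l]).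
  assert (Hv0 : Rabs (v - y) < d0) by (apply Rlt_le_trans with d; [exact Hv|apply Rmin_l]).
  assert (Hu1 : Rabs (u - x) < d1) by (apply Rlt_le_trans with d; [exact Hu|unfold d; eapply Rle_trans; [apply Rmin_r|apply Rmin_l]]).
  assert (Hv1 : Rabs (v - y) < d1) by (apply Rlt_le_trans with d; [exact Hv|unfold d; eapply Rle_trans; [apply Rmin_r|apply Rmin_l]]).
  assert (Hv2 : Rabs (v - y) < d2) by (apply Rlt_le_trans with d; [exact Hv|unfold d; eapply Rle_trans; [apply Rmin_r|apply Rmin_r]]).
  destruct (MVT_gen (fun t => f t v) x u (fun t => fx t v)) as [c [Hc1 Hc2]].
  { intros t Ht. apply is_derive_Reals. apply Hd0.
    - apply Rle_lt_trans with (Rabs (u - x)); [|assumption].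
      apply between_abs; lra.
    - assumption. }
  { intros t Ht. apply derivable_continuous_pt. exists (fx t v). apply Hd0.
    - apply Rle_lt_trans with (Rabs (u - x)); [|assumption].
      apply between_abs; exact Ht.
    - assumption. }
  assert (Hcx : Rabs (c - x) < d1).
  { apply Rle_lt_trans with (Rabs (u - x)); [|assumption].
    apply between_abs; exact Hc1. }
  assert (Hfx : Rabs (fx c v - fx x y) < eps / 2) by (apply Hd1; assumption).
  assert (Hfy : Rabs (f x v - f x y - fy x y * (v - y)) <= eps / 2 * Rabs (v - y)).
  { destruct (Req_dec v y) as [->|Hne].
    - replace (f x y - f x y - fy x y * (y - y)) with 0 by ring. rewrite Rabs_R0.
      apply Rmult_le_pos; [lra|apply Rabs_pos].
    - assert (Hh : v - y <> 0) by lra.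
      specialize (Hd2 (v - y) Hh Hv2). replace (y + (v - y)) with v in Hd2 by ring.
      replace (f x v - f x y - fy x y * (v - y)) with (((f x v - f x y) / (v - y) - fy x y) * (v - y)) by (field; assumption).
      rewrite Rabs_mult. apply Rmult_le_compat_r; [apply Rabs_pos|lra]. }
  replace (f u v - f x y - (fx x y * (u - x) + fy x y * (v - y)))
    with ((fx c v - fx x y) * (u - x) + (f x v - f x y - fy x y * (v - y))).
  2:{ simpl in Hc2. rewrite <- (Rplus_0_r (f u v)). replace (f u v) with (f x v + (f u v - f x v)) by ring.
      rewrite Hc2. ring. }
  eapply Rle_trans; [apply Rabs_triang|].
  rewrite Rabs_mult.
  apply Rle_trans with (eps / 2 * Rabs (u - x) + eps / 2 * Rabs (v - y)).
  { apply Rplus_le_compat; [|assumption]. apply Rmult_le_compat_r; [apply Rabs_pos|lra]. }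
  assert (Rabs (u - x) <= Rmax (Rabs (u - x)) (Rabs (v - y))) by apply Rmax_l.
  assert (Rabs (v - y) <= Rmax (Rabs (u - x)) (Rabs (v - y))) by apply Rmax_r.
  generalize (cond_pos eps); nra.
Qed.

Record Setting (phi px py pxx pxy pyx pyy : R -> R -> R) : Prop := {
  s_c : cont_Hbar phi; s_cx : cont_Hbar px; s_cy : cont_Hbar py;
  s_cxx : cont_Hbar pxx; s_cxy : cont_Hbar pxy; s_cyx : cont_Hbar pyx; s_cyy : cont_Hbar pyy;
  s_dx : pdx_H phi px; s_dy : pdy_H phi py; s_dxx : pdx_H px pxx; s_dxy : pdy_H px pxy;
  s_dyx : pdx_H py pyx; s_dyy : pdy_H py pyy;
  s_pde : forall x y, 0 < x -> pxx x y + pyy x y - / x * px x y = 0;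
  s_nonneg : forall x y, 0 <= x -> 0 <= phi x y;
  s_bdry : forall y, phi 0 y = 0 }.

Lemma contHbar_int h x y : cont_Hbar h -> 0 < x -> continuity_2d_pt h x y.
Proof.
  intros H Hx eps. destruct (H x y (Rlt_le _ _ Hx) eps (cond_pos eps)) as [d [Hd H1]].
  exists (mkposreal _ (Rmin_pos _ _ Hd Hx)). intros u v Hu Hv. simpl in *.
  apply H1.
  - assert (Rabs (u - x) < x) by (eapply Rlt_le_trans; [exact Hu|apply Rmin_r]).
    apply Rabs_def2 in H0. lra.
  - eapply Rlt_le_trans; [exact Hu|apply Rmin_l].
  - eapply Rlt_le_trans; [exact Hv|apply Rmin_l].
Qed.

Lemma pdx_loc f fx x y : pdx_H f fx -> 0 < x ->
  locally_2d (fun u v => derivable_pt_lim (fun t => f t v) u (fx u v)) x y.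
Proof.
  intros H Hx. exists (mkposreal _ Hx). intros u v Hu Hv. simpl in *.
  apply H. apply Rabs_def2 in Hu. lra.
Qed.

Lemma diff_gen f fx fy x y : pdx_H f fx -> pdy_H f fy -> cont_Hbar fx -> 0 < x ->
  differentiable_pt_lim f x y (fx x y) (fy x y).
Proof.
  intros H1 H2 H3 Hx. apply diff_of_partials.
  - apply pdx_loc; assumption.
  - apply contHbar_int; assumption.
  - apply H2; assumption.
Qed.



Lemma px_bdry phi px py pxx pxy pyx pyy :
  Setting phi px py pxx pxy pyx pyy -> forall y, px 0 y = 0.
Proof.
  intros S y.
  apply Rabs_eq_0. apply Rle_antisym; [|apply Rabs_pos].
  apply le_epsilon. intros eps0 Heps0. rewrite Rplus_0_l.
  set (eps := eps0 / 2). assert (Heps : 0 < eps) by (unfold eps; lra).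
  set (K := Rabs (pxx 0 y) + Rabs (pyy 0 y) + 2).
  assert (HK : 0 < K) by (unfold K; generalize (Rabs_pos (pxx 0 y)) (Rabs_pos (pyy 0 y)); lra).
  destruct (s_cx _ _ _ _ _ _ _ S 0 y (Rle_refl _) eps Heps) as [d1 [Hd1 H1]].
  destruct (s_cxx _ _ _ _ _ _ _ S 0 y (Rle_refl _) 1 Rlt_0_1) as [d2 [Hd2 H2]].
  destruct (s_cyy _ _ _ _ _ _ _ S 0 y (Rle_refl _) 1 Rlt_0_1) as [d3 [Hd3 H3]].
  set (x := Rmin (Rmin d1 d2) (Rmin d3 (eps / K)) / 2).
  assert (Hx : 0 < x).
  { unfold x. apply Rdiv_lt_0_compat; [|lra]. repeat apply Rmin_pos; try lra. apply Rdiv_lt_0_compat; lra. }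
  assert (Hxm : x < Rmin (Rmin d1 d2) (Rmin d3 (eps / K))) by (unfold x in Hx |- *; lra).
  assert (Hx1 : x < d1) by (generalize (Rmin_l (Rmin d1 d2) (Rmin d3 (eps / K))) (Rmin_l d1 d2); lra).
  assert (Hx2 : x < d2) by (generalize (Rmin_l (Rmin d1 d2) (Rmin d3 (eps / K))) (Rmin_r d1 d2); lra).
  assert (Hx3 : x < d3) by (generalize (Rmin_r (Rmin d1 d2) (Rmin d3 (eps / K))) (Rmin_l d3 (eps/K)); lra).
  assert (Hx4 : x < eps / K) by (generalize (Rmin_r (Rmin d1 d2) (Rmin d3 (eps / K))) (Rmin_r d3 (eps/K)); lra).
  assert (A1 : Rabs (px x y - px 0 y) < eps).
  { apply H1; [lra| | ]; rewrite ?Rminus_0_r, ?Rminus_diag, ?Rabs_R0, ?Rabs_right; lra. }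
  assert (A2 : Rabs (pxx x y - pxx 0 y) < 1).
  { apply H2; [lra| | ]; rewrite ?Rminus_0_r, ?Rminus_diag, ?Rabs_R0, ?Rabs_right; lra. }
  assert (A3 : Rabs (pyy x y - pyy 0 y) < 1).
  { apply H3; [lra| | ]; rewrite ?Rminus_0_r, ?Rminus_diag, ?Rabs_R0, ?Rabs_right; lra. }
  assert (E : px x y = x * (pxx x y + pyy x y)).
  { generalize (s_pde _ _ _ _ _ _ _ S x y Hx). intro E.
    apply (Rmult_eq_compat_l x) in E. rewrite Rmult_0_r in E.
    replace (x * (pxx x y + pyy x y - / x * px x y)) with (x * (pxx x y + pyy x y) - px x y) in E
      by (field; lra). lra. }
  assert (B : Rabs (pxx x y + pyy x y) <= K).
  { unfold K. 
    replace (pxx x y + pyy x y) with ((pxx x y - pxx 0 y) + pxx 0 y + ((pyy x y - pyy 0 y) + pyy 0 y)) by ring.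
    eapply Rle_trans; [apply Rabs_triang|]. 
    generalize (Rabs_triang (pxx x y - pxx 0 y) (pxx 0 y)) (Rabs_triang (pyy x y - pyy 0 y) (pyy 0 y)). lra. }
  assert (C : Rabs (px x y) <= eps).
  { rewrite E, Rabs_mult, (Rabs_right x) by lra.
    apply Rle_trans with (x * K). apply Rmult_le_compat_l; lra.
    apply Rlt_le. apply (Rmult_lt_compat_r K) in Hx4; [|lra].
    unfold Rdiv in Hx4. rewrite Rmult_assoc, Rinv_l, Rmult_1_r in Hx4; lra. }
  replace (px 0 y) with (px x y - (px x y - px 0 y)) by ring.
  eapply Rle_trans; [apply Rabs_triang|]. rewrite Rabs_Ropp.
  unfold eps in *. lra.
Qed.

Lemma contHbar_comp1 h a b t : cont_Hbar h -> continuity_pt a t -> continuity_pt b t ->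
  (forall s, 0 <= a s) -> continuity_pt (fun s => h (a s) (b s)) t.
Proof.
  intros Hh Ha Hb Hp.
  apply (c2_slice1 (fun u v => h (a u) (b u)) t 0).
  apply (contHbar_comp2 h (fun u v => a u) (fun u v => b u)); try apply c2_of_1; auto.
Qed.

Lemma cont_max0 t : continuity_pt (fun s => Rmax 0 s) t.
Proof.
  intros eps Heps. exists eps. split; [lra|]. intros x [_ Hx]. simpl in *. unfold R_dist in *.
  apply Rle_lt_trans with (Rabs (x - t)); [|assumption].
  unfold Rmax. destruct (Rle_dec 0 x), (Rle_dec 0 t); unfold Rabs;
  repeat destruct Rcase_abs; lra.
Qed.

Lemma cauchy_mvt f g df dg a b : a < b ->
  (forall t, a < t < b -> derivable_pt_lim f t (df t)) ->
  (forall t, a < t < b -> derivable_pt_lim g t (dg t)) ->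
  (forall t, a <= t <= b -> continuity_pt f t) ->
  (forall t, a <= t <= b -> continuity_pt g t) ->
  exists c, a < c < b /\ (g b - g a) * df c = (f b - f a) * dg c.
Proof.
  intros Hab Hf Hg Cf Cg.
  set (pr1 := fun c (P : a < c < b) => exist (fun l => derivable_pt_abs f c l) (df c) (Hf c P)).
  set (pr2 := fun c (P : a < c < b) => exist (fun l => derivable_pt_abs g c l) (dg c) (Hg c P)).
  destruct (MVT f g a b pr1 pr2 Hab Cf Cg) as [c [P E]].
  exists c. split; [exact P|]. exact E.
Qed.

Lemma cont_c (c : R) t : continuity_pt (fun _ => c) t.
Proof. apply continuity_pt_const. intros u v; reflexivity. Qed.

Lemma phi_quot phi px py pxx pxy pyx pyy :
  Setting phi px py pxx pxy pyx pyy -> forall x y, 0 < x ->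
  exists c, 0 < c < x /\ phi x y / x ^ 2 = pxx c y / 2.
Proof.
  intros S x y Hx.
  destruct (cauchy_mvt (fun t => phi (Rmax 0 t) y) (fun t => t ^ 2) (fun t => px t y) (fun t => 2 * t) 0 x Hx)
    as [c1 [Hc1 E1]].
  { intros t Ht. apply (derivable_pt_lim_locally_ext (fun t => phi t y) _ t 0 x); [lra| |].
    - intros z Hz. rewrite Rmax_right; lra.
    - apply (s_dx _ _ _ _ _ _ _ S). lra. }
  { intros t Ht. replace (2 * t) with (INR 2 * t ^ (pred 2)) by (simpl; ring). apply derivable_pt_lim_pow. }
  { intros t Ht. apply contHbar_comp1; [apply (s_c _ _ _ _ _ _ _ S)|apply cont_max0|apply cont_c|].
    intro s; apply Rmax_l. }
  { intros t Ht. apply derivable_continuous_pt. apply derivable_pt_pow. }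
  destruct (cauchy_mvt (fun t => px (Rmax 0 t) y) (fun t => t) (fun t => pxx t y) (fun t => 1) 0 c1 (proj1 Hc1))
    as [c2 [Hc2 E2]].
  { intros t Ht. apply (derivable_pt_lim_locally_ext (fun t => px t y) _ t 0 c1); [lra| |].
    - intros z Hz. rewrite Rmax_right; lra.
    - apply (s_dxx _ _ _ _ _ _ _ S). lra. }
  { intros t Ht. apply derivable_pt_lim_id. }
  { intros t Ht. apply contHbar_comp1; [apply (s_cx _ _ _ _ _ _ _ S)|apply cont_max0|apply cont_c|].
    intro s; apply Rmax_l. }
  { intros t Ht. apply derivable_continuous_pt. apply derivable_pt_id. }
  exists c2. split; [lra|].
  simpl in E1, E2.
  rewrite Rmax_right in E1 by lra. rewrite Rmax_left in E1 by lra.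
  rewrite Rmax_right in E2 by lra. rewrite Rmax_left in E2 by lra.
  rewrite (s_bdry _ _ _ _ _ _ _ S) in E1. rewrite (px_bdry _ _ _ _ _ _ _ S) in E2.
  assert (Hpx : px c1 y = c1 * pxx c2 y) by lra.
  rewrite Hpx in E1.
  assert (Hc1' : c1 <> 0) by lra.
  apply (Rmult_eq_reg_r (2 * c1 * x ^ 2)); [|apply Rmult_integral_contrapositive; split; [lra|apply pow_nonzero; lra]].
  field_simplify; [|lra].
  replace (x ^ 2) with (x * (x * 1)) by ring. nra.
Qed.

Definition Fdef (phi pxx : R -> R -> R) (x y : R) : R :=
  if Rle_dec x 0 then pxx 0 y / 2 else phi x y / x ^ 2.

Lemma Fdef_pos phi pxx x y : 0 < x -> Fdef phi pxx x y = phi x y / x ^ 2.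
Proof. intros Hx. unfold Fdef. destruct (Rle_dec x 0); [lra|reflexivity]. Qed.

Lemma Fdef_0 phi pxx y : Fdef phi pxx 0 y = pxx 0 y / 2.
Proof. unfold Fdef. destruct (Rle_dec 0 0); [reflexivity|lra]. Qed.

Lemma c2_to_Hbar h x y : continuity_2d_pt h x y ->
  forall eps, 0 < eps -> exists d, 0 < d /\
      forall x' y', 0 <= x' -> Rabs (x' - x) < d -> Rabs (y' - y) < d ->
        Rabs (h x' y' - h x y) < eps.
Proof.
  intros H eps Heps. destruct (H (mkposreal eps Heps)) as [d H1].
  exists d. split; [apply cond_pos|]. intros; apply H1; assumption.
Qed.

Lemma cont_inv_sq x y : 0 < x -> continuity_2d_pt (fun u v => / u ^ 2) x y.
Proof.
  intros Hx. apply continuity_2d_pt_inv; [|apply pow_nonzero; lra].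
  apply (continuity_2d_pt_ext (fun u v => u * u)); [intros; simpl; ring|].
  apply continuity_2d_pt_mult; apply continuity_2d_pt_id1.
Qed.

Lemma F_cont_int phi px py pxx pxy pyx pyy :
  Setting phi px py pxx pxy pyx pyy -> forall x y, 0 < x ->
  continuity_2d_pt (Fdef phi pxx) x y.
Proof.
  intros S x y Hx.
  apply (continuity_2d_pt_ext_loc (fun u v => phi u v * / u ^ 2)).
  - exists (mkposreal _ Hx). intros u v Hu Hv. simpl in Hu. apply Rabs_def2 in Hu.
    rewrite Fdef_pos by lra. reflexivity.
  - apply continuity_2d_pt_mult; [apply contHbar_int; [apply (s_c _ _ _ _ _ _ _ S)|exact Hx]|].
    apply cont_inv_sq; exact Hx.
Qed.

Lemma F_cont phi px py pxx pxy pyx pyy :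
  Setting phi px py pxx pxy pyx pyy -> cont_Hbar (Fdef phi pxx).
Proof.
  intros S x y Hx. destruct (Rle_lt_or_eq_dec _ _ Hx) as [Hx'|<-].
  - apply c2_to_Hbar. apply (F_cont_int _ _ _ _ _ _ _ S). exact Hx'.
  - intros eps Heps.
    destruct (s_cxx _ _ _ _ _ _ _ S 0 y (Rle_refl _) (2 * eps)) as [d [Hd H1]]; [lra|].
    exists d. split; [exact Hd|]. intros x' y' Hx' Hxd Hyd.
    rewrite Fdef_0. destruct (Rle_lt_or_eq_dec _ _ Hx') as [Hp|<-].
    + rewrite Fdef_pos by exact Hp.
      destruct (phi_quot _ _ _ _ _ _ _ S x' y' Hp) as [c [Hc E]]. rewrite E.
      replace (pxx c y' / 2 - pxx 0 y / 2) with ((pxx c y' - pxx 0 y) / 2) by field.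
      rewrite Rabs_div by lra. rewrite (Rabs_right 2) by lra.
      assert (Rabs (pxx c y' - pxx 0 y) < 2 * eps).
      { apply H1; [lra| |exact Hyd]. rewrite Rminus_0_r, Rabs_right by lra.
        rewrite Rminus_0_r, Rabs_right in Hxd by lra. lra. }
      lra.
    + rewrite Fdef_0.
      replace (pxx 0 y' / 2 - pxx 0 y / 2) with ((pxx 0 y' - pxx 0 y) / 2) by field.
      rewrite Rabs_div by lra. rewrite (Rabs_right 2) by lra.
      assert (Rabs (pxx 0 y' - pxx 0 y) < 2 * eps) by (apply H1; [lra|exact Hxd|exact Hyd]).
      lra.
Qed.

Lemma Hbar_bdry_nonneg h y : cont_Hbar h -> (forall x, 0 < x -> 0 <= h x y) -> 0 <= h 0 y.
Proof.
  intros Hc Hp. destruct (Rle_or_lt 0 (h 0 y)) as [|Hn]; [assumption|exfalso].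
  destruct (Hc 0 y (Rle_refl _) (- h 0 y) ltac:(lra)) as [d [Hd H1]].
  assert (A : Rabs (h (d/2) y - h 0 y) < - h 0 y).
  { apply H1; [lra| |]; rewrite ?Rminus_0_r, ?Rminus_diag, ?Rabs_R0, ?Rabs_right; lra. }
  generalize (Hp (d/2) ltac:(lra)). intro. apply Rabs_def2 in A. lra.
Qed.

Lemma F_nonneg phi px py pxx pxy pyx pyy :
  Setting phi px py pxx pxy pyx pyy -> forall x y, 0 <= x -> 0 <= Fdef phi pxx x y.
Proof.
  intros S.
  assert (Hp : forall x y, 0 < x -> 0 <= Fdef phi pxx x y).
  { intros x y Hx. rewrite Fdef_pos by exact Hx. unfold Rdiv. apply Rmult_le_pos.
    - apply (s_nonneg _ _ _ _ _ _ _ S); lra.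
    - apply Rlt_le, Rinv_0_lt_compat, pow_lt; exact Hx. }
  intros x y Hx. destruct (Rle_lt_or_eq_dec _ _ Hx) as [Hx'|<-]; [apply Hp; exact Hx'|].
  apply Hbar_bdry_nonneg; [apply (F_cont _ _ _ _ _ _ _ S)|]. intros; apply Hp; assumption.
Qed.

Lemma dlim_eq f x l l' : derivable_pt_lim f x l -> l = l' -> derivable_pt_lim f x l'.
Proof. intros H ->; exact H. Qed.

Lemma dquot f df x n : derivable_pt_lim f x df -> 0 < x ->
  derivable_pt_lim (fun t => f t / t ^ n) x (df / x ^ n - INR n * f x / x ^ (S n)).
Proof.
  intros H Hx.
  assert (H2 : derivable_pt_lim (fun t => t ^ n) x (INR n * x ^ pred n)) by apply derivable_pt_lim_pow.
  generalize (derivable_pt_lim_div f (fun t => t ^ n) x df _ H H2 (pow_nonzero x n ltac:(lra))).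
  intro H3. unfold div_fct in H3. eapply dlim_eq; [exact H3|]. unfold Rsqr.
  assert (x ^ n <> 0) by (apply pow_nonzero; lra).
  destruct n as [|m].
  - simpl. field. lra.
  - simpl pred. simpl pow. assert (x ^ m <> 0) by (apply pow_nonzero; lra). rewrite S_INR. field. repeat split; lra.
Qed.

Lemma pdx_loc_ext (f g : R -> R -> R) gx x y : 0 < x -> (forall u v, 0 < u -> f u v = g u v) ->
  derivable_pt_lim (fun t => f t y) x gx -> derivable_pt_lim (fun t => g t y) x gx.
Proof.
  intros Hx E H. apply (derivable_pt_lim_locally_ext (fun t => f t y) _ x 0 (x + 1)); [lra| |exact H].
  intros z Hz. apply E. lra.
Qed.

Lemma pdy_loc_ext (f g : R -> R -> R) gy x y : 0 < x -> (forall u v, 0 < u -> f u v = g u v) ->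
  derivable_pt_lim (fun t => f x t) y gy -> derivable_pt_lim (fun t => g x t) y gy.
Proof.
  intros Hx E H. apply (derivable_pt_lim_locally_ext (fun t => f x t) _ y (y - 1) (y + 1)); [lra| |exact H].
  intros z Hz. apply E. lra.
Qed.

Lemma contH_ext (f g : R -> R -> R) : (forall u v, 0 < u -> f u v = g u v) -> cont_H f -> cont_H g.
Proof.
  intros E H x y Hx. apply cont_at2_iff. apply (continuity_2d_pt_ext_loc f).
  - exists (mkposreal _ Hx). intros u v Hu Hv. simpl in Hu. apply Rabs_def2 in Hu. apply E; lra.
  - apply cont_at2_iff, H; exact Hx.
Qed.

Lemma Ck_ext k (f g : R -> R -> R) : (forall u v, 0 < u -> f u v = g u v) -> Ck_H k f -> Ck_H k g.
Proof.
  intros E. destruct k as [|k]; simpl.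
  - intros [H _]. split; [|exact I]. eapply contH_ext; eassumption.
  - intros [H [gx [gy [H1 [H2 [H3 H4]]]]]]. split; [eapply contH_ext; eassumption|].
    exists gx, gy. repeat split; try assumption.
    + intros x y Hx. eapply pdx_loc_ext; [exact Hx|exact E|apply H1; exact Hx].
    + intros x y Hx. eapply pdy_loc_ext; [exact Hx|exact E|apply H2; exact Hx].
Qed.

Lemma Ck_cont k f : Ck_H k f -> cont_H f.
Proof. destruct k; simpl; tauto. Qed.

Lemma Ck_mono k f : Ck_H (S k) f -> Ck_H k f.
Proof.
  revert f. induction k as [|k IH]; intros f.
  - simpl. tauto.
  - intros [H [gx [gy [H1 [H2 [H3 H4]]]]]]. split; [exact H|].
    exists gx, gy. repeat split; try assumption; apply IH; assumption.
Qed.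

Lemma contH_plus f g : cont_H f -> cont_H g -> cont_H (fun x y => f x y + g x y).
Proof.
  intros Hf Hg x y Hx. apply cont_at2_iff. apply continuity_2d_pt_plus; apply cont_at2_iff; auto.
Qed.

Lemma contH_mult f g : cont_H f -> cont_H g -> cont_H (fun x y => f x y * g x y).
Proof.
  intros Hf Hg x y Hx. apply cont_at2_iff. apply continuity_2d_pt_mult; apply cont_at2_iff; auto.
Qed.

Lemma Ck_plus k : forall f g, Ck_H k f -> Ck_H k g -> Ck_H k (fun x y => f x y + g x y).
Proof.
  induction k as [|k IH]; intros f g.
  - simpl. intros [Hf _] [Hg _]. split; [apply contH_plus; assumption|exact I].
  - intros [Hf [fx [fy [F1 [F2 [F3 F4]]]]]] [Hg [gx [gy [G1 [G2 [G3 G4]]]]]].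
    split; [apply contH_plus; assumption|].
    exists (fun x y => fx x y + gx x y), (fun x y => fy x y + gy x y).
    repeat split.
    + intros x y Hx. apply (derivable_pt_lim_plus (fun t => f t y) (fun t => g t y)); auto.
    + intros x y Hx. apply (derivable_pt_lim_plus (fun t => f x t) (fun t => g x t)); auto.
    + apply IH; assumption.
    + apply IH; assumption.
Qed.

Lemma Ck_mult k : forall f g, Ck_H k f -> Ck_H k g -> Ck_H k (fun x y => f x y * g x y).
Proof.
  induction k as [|k IH]; intros f g.
  - simpl. intros [Hf _] [Hg _]. split; [apply contH_mult; assumption|exact I].
  - intros Cf Cg. generalize (Ck_mono _ _ Cf) (Ck_mono _ _ Cg). intros Cf' Cg'.
    destruct Cf as [Hf [fx [fy [F1 [F2 [F3 F4]]]]]]. destruct Cg as [Hg [gx [gy [G1 [G2 [G3 G4]]]]]].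
    split; [apply contH_mult; assumption|].
    exists (fun x y => fx x y * g x y + f x y * gx x y), (fun x y => fy x y * g x y + f x y * gy x y).
    repeat split.
    + intros x y Hx. apply (derivable_pt_lim_mult (fun t => f t y) (fun t => g t y)); auto.
    + intros x y Hx. apply (derivable_pt_lim_mult (fun t => f x t) (fun t => g x t)); auto.
    + apply Ck_plus; apply IH; assumption.
    + apply Ck_plus; apply IH; assumption.
Qed.

Lemma contH_powinv c n : cont_H (fun x y => c / x ^ n).
Proof.
  intros x y Hx. apply cont_at2_iff. apply c2_of_1.
  apply continuity_pt_div; [apply continuity_pt_const; intros u v; reflexivity| |apply pow_nonzero; lra].
  apply derivable_continuous_pt, derivable_pt_pow.
Qed.

Lemma Ck_powinv k : forall c n, Ck_H k (fun x y => c / x ^ n).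
Proof.
  induction k as [|k IH]; intros c n.
  - split; [apply contH_powinv|exact I].
  - split; [apply contH_powinv|].
    exists (fun x y => (- INR n * c) / x ^ (S n)), (fun x y => 0 / x ^ 0).
    repeat split; try apply IH.
    + intros x y Hx.
      generalize (dquot (fun _ => c) 0 x n (derivable_pt_lim_const c x) Hx). intro H.
      eapply dlim_eq; [exact H|]. field. split; apply pow_nonzero; lra.
    + intros x y Hx. eapply dlim_eq; [apply derivable_pt_lim_const|]. simpl. field.
Qed.

Lemma F_Cinf phi pxx : Cinf_H phi -> Cinf_H (Fdef phi pxx).
Proof.
  intros H k. apply (Ck_ext k (fun x y => phi x y * (1 / x ^ 2))).
  - intros u v Hu. rewrite Fdef_pos by exact Hu. unfold Rdiv. ring.
  - apply Ck_mult; [apply H|apply Ck_powinv].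
Qed.

Lemma dscale f l x c : derivable_pt_lim f x l -> derivable_pt_lim (fun t => f t / c) x (l / c).
Proof.
  intros H. generalize (derivable_pt_lim_mult f (fun _ => / c) x l 0 H (derivable_pt_lim_const _ x)).
  intro H1. eapply dlim_eq; [eapply derivable_pt_lim_ext; [|exact H1]|].
  - intro t. unfold mult_fct, Rdiv. reflexivity.
  - unfold Rdiv. ring.
Qed.

Lemma F_pde phi px py pxx pxy pyx pyy :
  Setting phi px py pxx pxy pyx pyy ->
  exists fx fy fxx fyy,
      pdx_H (Fdef phi pxx) fx /\ pdy_H (Fdef phi pxx) fy /\ pdx_H fx fxx /\ pdy_H fy fyy /\
      forall x y, 0 < x -> fxx x y + fyy x y + 3 / x * fx x y = 0.
Proof.
  intros S.
  exists (fun x y => px x y / x ^ 2 - 2 * phi x y / x ^ 3), (fun x y => py x y / x ^ 2),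
    (fun x y => pxx x y / x ^ 2 - 4 * px x y / x ^ 3 + 6 * phi x y / x ^ 4), (fun x y => pyy x y / x ^ 2).
  repeat split.
  - intros x y Hx. apply (pdx_loc_ext (fun u v => phi u v / u ^ 2)); [exact Hx| |].
    { intros u v Hu. rewrite Fdef_pos by exact Hu. reflexivity. }
    eapply dlim_eq; [apply (dquot (fun t => phi t y) (px x y) x 2); [apply (s_dx _ _ _ _ _ _ _ S)|]; exact Hx|].
    simpl. field. lra.
  - intros x y Hx. apply (pdy_loc_ext (fun u v => phi u v / u ^ 2)); [exact Hx| |].
    { intros u v Hu. rewrite Fdef_pos by exact Hu. reflexivity. }
    apply (dscale (fun t => phi x t)). apply (s_dy _ _ _ _ _ _ _ S). exact Hx.
  - intros x y Hx.
    eapply dlim_eq.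
    { eapply derivable_pt_lim_ext; [|apply (derivable_pt_lim_minus (fun t => px t y / t ^ 2) (fun t => 2 * phi t y / t ^ 3) x)].
      - intro t. unfold minus_fct. reflexivity.
      - apply (dquot (fun t => px t y) (pxx x y) x 2); [apply (s_dxx _ _ _ _ _ _ _ S)|]; exact Hx.
      - apply (dquot (fun t => 2 * phi t y) (2 * px x y) x 3); [|exact Hx].
        apply derivable_pt_lim_scal. apply (s_dx _ _ _ _ _ _ _ S); exact Hx. }
    simpl. field. lra.
  - intros x y Hx. apply (dscale (fun t => py x t)). apply (s_dyy _ _ _ _ _ _ _ S). exact Hx.
  - intros x y Hx. generalize (s_pde _ _ _ _ _ _ _ S x y Hx). intro E.
    replace (pxx x y / x ^ 2 - 4 * px x y / x ^ 3 + 6 * phi x y / x ^ 4 + pyy x y / x ^ 2 +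
      3 / x * (px x y / x ^ 2 - 2 * phi x y / x ^ 3)) with
      ((pxx x y + pyy x y - / x * px x y) / x ^ 2) by (field; lra).
    rewrite E. unfold Rdiv. ring.
Qed.

Lemma locally_of_ball (P : R -> Prop) r d : 0 < d -> (forall y, Rabs (y - r) < d -> P y) -> locally r P.
Proof.
  intros Hd H. exists (mkposreal d Hd). intros y Hy. apply H. exact Hy.
Qed.

Lemma cpt_to_cont f t : continuity_pt f t -> continuous f t.
Proof. intro H. apply continuity_pt_filterlim. exact H. Qed.

Lemma cont_to_cpt f t : continuous f t -> continuity_pt f t.
Proof. intro H. apply continuity_pt_filterlim. exact H. Qed.

Lemma param_deriv (U V : R -> R -> R) lo hi r0 d : 0 < d ->
  (forall r t, Rabs (r - r0) < d -> derivable_pt_lim (fun u => U u t) r (V r t)) ->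
  (forall r t, Rabs (r - r0) < d -> continuity_2d_pt V r t) ->
  (forall r t, Rabs (r - r0) < d -> continuity_pt (fun s => U r s) t) ->
  is_derive (fun r => RInt (fun t => U r t) lo hi) r0 (RInt (fun t => V r0 t) lo hi).
Proof.
  intros Hd HD HC HU.
  assert (HDer : forall r t, Rabs (r - r0) < d -> Derive (fun u => U u t) r = V r t).
  { intros r t Hr. apply is_derive_unique. apply is_derive_Reals. apply HD. exact Hr. }
  assert (E : RInt (fun t => V r0 t) lo hi = RInt (fun t => Derive (fun u => U u t) r0) lo hi).
  { apply RInt_ext. intros t _. symmetry. apply HDer. rewrite Rminus_diag, Rabs_R0. exact Hd. }
  rewrite E.
  apply (is_derive_RInt_param U lo hi r0).
  - apply (locally_of_ball _ r0 d Hd). intros y Hy t _. exists (V y t). apply is_derive_Reals. apply HD. exact Hy.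
  - intros t _. apply (continuity_2d_pt_ext_loc V).
    + exists (mkposreal d Hd). intros u v Hu Hv. symmetry. apply HDer. exact Hu.
    + apply HC. rewrite Rminus_diag, Rabs_R0. exact Hd.
  - apply (locally_of_ball _ r0 d Hd). intros y Hy. apply (@ex_RInt_continuous R_CompleteNormedModule). intros z _.
    apply cpt_to_cont. apply HU. exact Hy.
Qed.

Lemma ftc_open (h G : R -> R) a b : a < b -> (forall t, continuous h t) ->
  (forall t, a <= t <= b -> continuity_pt G t) ->
  (forall t, a < t < b -> derivable_pt_lim G t (h t)) ->
  RInt h a b = G b - G a.
Proof.
  intros Hab Hh HG HdG.
  assert (HI : forall t, is_derive (fun s => RInt h a s) t (h t)).
  { intros t. apply (is_derive_RInt h (fun s => RInt h a s) a t).
    - exists (mkposreal 1 Rlt_0_1). intros y _. apply (@RInt_correct R_CompleteNormedModule).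
      apply (@ex_RInt_continuous R_CompleteNormedModule). intros; apply Hh.
    - apply Hh. }
  set (K := fun s => RInt h a s - G s).
  destruct (cauchy_mvt K (fun s => s) (fun _ => 0) (fun _ => 1) a b Hab) as [c [Hc E]].
  - intros t Ht. unfold K.
    assert (H1 := derivable_pt_lim_minus (fun s => RInt h a s) G t (h t) (h t)).
    eapply dlim_eq; [eapply derivable_pt_lim_ext; [|apply H1]|].
    + intro; unfold minus_fct; reflexivity.
    + apply is_derive_Reals. apply HI.
    + apply HdG. exact Ht.
    + ring.
  - intros t Ht. apply derivable_pt_lim_id.
  - intros t Ht. unfold K. apply continuity_pt_minus; [|apply HG; exact Ht].
    apply derivable_continuous_pt. exists (h t). apply is_derive_Reals. apply HI.
  - intros t Ht. apply derivable_continuous_pt, derivable_pt_id.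
  - unfold K in E. rewrite RInt_point in E. 
    assert (Hba : b - a <> 0) by lra.
    replace ((b - a) * 0) with 0 in E by ring.
    symmetry in E. apply Rmult_integral in E. destruct E as [E|E]; [|lra].
    simpl in E. unfold zero in E; simpl in E. lra.
Qed.

Lemma mono_nonincr (k dk : R -> R) a b : a < b ->
  (forall t, a < t < b -> derivable_pt_lim k t (dk t)) ->
  (forall t, a <= t <= b -> continuity_pt k t) ->
  (forall t, a < t < b -> dk t <= 0) -> k b <= k a.
Proof.
  intros Hab HD HC Hneg.
  destruct (cauchy_mvt k (fun s => s) dk (fun _ => 1) a b Hab) as [c [Hc E]].
  - exact HD.
  - intros; apply derivable_pt_lim_id.
  - exact HC.
  - intros; apply derivable_continuous_pt, derivable_pt_id.
  - generalize (Hneg c Hc). intro. nra.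
Qed.

Lemma RInt_pos_pt (h : R -> R) a b t0 : a < t0 < b -> (forall t, continuous h t) ->
  (forall t, a <= t <= b -> 0 <= h t) -> 0 < h t0 -> 0 < RInt h a b.
Proof.
  intros Ht0 Hc Hpos Hh0.
  assert (Hc0 := cont_to_cpt _ _ (Hc t0)).
  destruct (Hc0 (h t0 / 2)) as [d [Hd Hd1]]; [lra|].
  set (e := Rmin d (Rmin (t0 - a) (b - t0)) / 2).
  assert (He : 0 < e) by (unfold e; apply Rdiv_lt_0_compat; [repeat apply Rmin_pos|]; lra).
  assert (He1 : e < d) by (unfold e; generalize (Rmin_l d (Rmin (t0 - a) (b - t0))); lra).
  assert (He2 : e < t0 - a) by (unfold e; generalize (Rmin_r d (Rmin (t0 - a) (b - t0))) (Rmin_l (t0 - a) (b - t0)); lra).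
  assert (He3 : e < b - t0) by (unfold e; generalize (Rmin_r d (Rmin (t0 - a) (b - t0))) (Rmin_r (t0 - a) (b - t0)); lra).
  assert (Hex : forall u v, ex_RInt h u v) by (intros; apply (@ex_RInt_continuous R_CompleteNormedModule); intros; apply Hc).
  rewrite <- (RInt_Chasles h a (t0 - e) b) by apply Hex.
  rewrite <- (RInt_Chasles h (t0 - e) (t0 + e) b) by apply Hex.
  assert (I1 : 0 <= RInt h a (t0 - e)).
  { apply RInt_ge_0; [lra|apply Hex|]. intros; apply Hpos; lra. }
  assert (I3 : 0 <= RInt h (t0 + e) b).
  { apply RInt_ge_0; [lra|apply Hex|]. intros; apply Hpos; lra. }
  assert (I2 : 0 < RInt h (t0 - e) (t0 + e)).
  { apply RInt_gt_0; [lra| |intros; apply Hc].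
    intros x Hx. destruct (Req_dec x t0) as [->|Hne]; [lra|].
    assert (Rabs (h x - h t0) < h t0 / 2).
    { apply Hd1. split; [split; [exact I|auto]|]. simpl. unfold R_dist. apply Rabs_def1; lra. }
    apply Rabs_def2 in H. lra. }
  simpl. unfold plus; simpl. lra.
Qed.

Lemma diff_H f fx fy x y : pdx_H f fx -> pdy_H f fy -> cont_H fx -> 0 < x ->
  differentiable_pt_lim f x y (fx x y) (fy x y).
Proof.
  intros H1 H2 H3 Hx. apply diff_of_partials.
  - apply pdx_loc; assumption.
  - apply cont_at2_iff. apply H3; assumption.
  - apply H2; assumption.
Qed.

Lemma chain f fx fy (X Y : R -> R) dX dY r : pdx_H f fx -> pdy_H f fy -> cont_H fx -> 0 < X r ->
  derivable_pt_lim X r dX -> derivable_pt_lim Y r dY ->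
  derivable_pt_lim (fun u => f (X u) (Y u)) r (fx (X r) (Y r) * dX + fy (X r) (Y r) * dY).
Proof.
  intros H1 H2 H3 Hx HX HY. apply derivable_pt_lim_comp_2d; [|assumption|assumption].
  apply diff_H; assumption.
Qed.

Record C2H (g gx gy gxx gxy gyx gyy : R -> R -> R) : Prop := {
  h_dx : pdx_H g gx; h_dy : pdy_H g gy; h_dxx : pdx_H gx gxx; h_dxy : pdy_H gx gxy;
  h_dyx : pdx_H gy gyx; h_dyy : pdy_H gy gyy;
  h_c : cont_H g; h_cx : cont_H gx; h_cy : cont_H gy; h_cxx : cont_H gxx; h_cxy : cont_H gxy;
  h_cyx : cont_H gyx; h_cyy : cont_H gyy }.

Lemma cont_A a r t : continuity_2d_pt (fun u v => a + u * cos v) r t.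
Proof.
  apply continuity_2d_pt_plus; [apply continuity_2d_pt_const|].
  apply continuity_2d_pt_mult; [apply continuity_2d_pt_id1|]. apply c2_of_2. apply continuity_cos.
Qed.

Lemma cont_B b r t : continuity_2d_pt (fun u v => b + u * sin v) r t.
Proof.
  apply continuity_2d_pt_plus; [apply continuity_2d_pt_const|].
  apply continuity_2d_pt_mult; [apply continuity_2d_pt_id1|]. apply c2_of_2. apply continuity_sin.
Qed.

Lemma contH_c2 h x y : cont_H h -> 0 < x -> continuity_2d_pt h x y.
Proof. intros H Hx. apply cont_at2_iff, H, Hx. Qed.

Lemma cont_polar h a b r t : cont_H h -> 0 < a + r * cos t ->
  continuity_2d_pt (fun u v => h (a + u * cos v) (b + u * sin v)) r t.
Proof.
  intros H Hp. apply (contH_comp2 h (fun u v => a + u * cos v) (fun u v => b + u * sin v)).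
  - intros; apply contH_c2; assumption.
  - apply cont_A.
  - apply cont_B.
  - exact Hp.
Qed.

Lemma polar_pos a r t : Rabs r < a -> 0 < a + r * cos t.
Proof.
  intros H. assert (Rabs (r * cos t) <= Rabs r).
  { rewrite Rabs_mult. rewrite <- (Rmult_1_r (Rabs r)) at 2. apply Rmult_le_compat_l; [apply Rabs_pos|].
    apply Rabs_le. split; [apply COS_bound|apply COS_bound]. }
  generalize (Rabs_maj2 (r * cos t)). lra.
Qed.


Lemma dlin a c r : derivable_pt_lim (fun u => a + u * c) r c.
Proof. apply is_derive_Reals. auto_derive; [exact I|ring]. Qed.

Lemma dcomb (f1 f2 : R -> R) c1 c2 l1 l2 r : derivable_pt_lim f1 r l1 -> derivable_pt_lim f2 r l2 ->
  derivable_pt_lim (fun u => c1 * f1 u + c2 * f2 u) r (c1 * l1 + c2 * l2).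
Proof.
  intros H1 H2.
  apply (derivable_pt_lim_plus (fun u => c1 * f1 u) (fun u => c2 * f2 u)).
  - apply (derivable_pt_lim_scal f1 c1 r l1 H1).
  - apply (derivable_pt_lim_scal f2 c2 r l2 H2).
Qed.

Lemma polar_dr h hx hy a b r t : pdx_H h hx -> pdy_H h hy -> cont_H hx -> Rabs r < a ->
  derivable_pt_lim (fun u => h (a + u * cos t) (b + u * sin t)) r
    (cos t * hx (a + r * cos t) (b + r * sin t) + sin t * hy (a + r * cos t) (b + r * sin t)).
Proof.
  intros H1 H2 H3 Hr. eapply dlim_eq.
  - apply (chain h hx hy (fun u => a + u * cos t) (fun u => b + u * sin t)); try assumption.
    + apply polar_pos; exact Hr.
    + apply dlin.
    + apply dlin.
  - ring.
Qed.

Lemma dcos_lin a r t : derivable_pt_lim (fun v => a + r * cos v) t (- r * sin t).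
Proof.
  apply is_derive_Reals. auto_derive; [exact I|]. ring.
Qed.

Lemma dsin_lin b r t : derivable_pt_lim (fun v => b + r * sin v) t (r * cos t).
Proof.
  apply is_derive_Reals. auto_derive; [exact I|]. ring.
Qed.

Lemma polar_dt h hx hy a b r t : pdx_H h hx -> pdy_H h hy -> cont_H hx -> Rabs r < a ->
  derivable_pt_lim (fun v => h (a + r * cos v) (b + r * sin v)) t
    (- r * sin t * hx (a + r * cos t) (b + r * sin t) + r * cos t * hy (a + r * cos t) (b + r * sin t)).
Proof.
  intros H1 H2 H3 Hr. eapply dlim_eq.
  - apply (chain h hx hy (fun v => a + r * cos v) (fun v => b + r * sin v)); try assumption.
    + apply polar_pos; exact Hr.
    + apply dcos_lin.
    + apply dsin_lin.
  - ring.
Qed.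

Lemma abs_tri r r0 d a : d = a - Rabs r0 -> Rabs (r - r0) < d -> Rabs r < a.
Proof.
  intros -> H. replace r with ((r - r0) + r0) by ring.
  eapply Rle_lt_trans; [apply Rabs_triang|]. lra.
Qed.



Lemma circ_d1 g gx gy gxx gxy gyx gyy a b r0 : C2H g gx gy gxx gxy gyx gyy -> Rabs r0 < a ->
  is_derive (fun r => RInt (fun t => g (a + r * cos t) (b + r * sin t)) 0 (2 * PI)) r0
    (RInt (fun t => cos t * gx (a + r0 * cos t) (b + r0 * sin t) + sin t * gy (a + r0 * cos t) (b + r0 * sin t)) 0 (2 * PI)).
Proof.
  intros S Hr0.
  apply (param_deriv (fun r t => g (a + r * cos t) (b + r * sin t))
     (fun r t => cos t * gx (a + r * cos t) (b + r * sin t) + sin t * gy (a + r * cos t) (b + r * sin t))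
     0 (2 * PI) r0 (a - Rabs r0)); [lra| | |].
  - intros r t Hr. apply polar_dr; try apply S. eapply abs_tri; [reflexivity|exact Hr].
  - intros r t Hr. assert (Ha := abs_tri r r0 _ a eq_refl Hr).
    apply continuity_2d_pt_plus; apply continuity_2d_pt_mult.
    + apply c2_of_2, continuity_cos.
    + apply cont_polar; [apply S|apply polar_pos; exact Ha].
    + apply c2_of_2, continuity_sin.
    + apply cont_polar; [apply S|apply polar_pos; exact Ha].
  - intros r t Hr. assert (Ha := abs_tri r r0 _ a eq_refl Hr).
    apply (c2_slice2 (fun u v => g (a + u * cos v) (b + u * sin v))).
    apply cont_polar; [apply S|apply polar_pos; exact Ha].
Qed.

Lemma circ_d2 g gx gy gxx gxy gyx gyy a b r0 : C2H g gx gy gxx gxy gyx gyy -> Rabs r0 < a ->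
  is_derive (fun r => RInt (fun t => cos t * gx (a + r * cos t) (b + r * sin t) + sin t * gy (a + r * cos t) (b + r * sin t)) 0 (2 * PI)) r0
    (RInt (fun t => cos t * (cos t * gxx (a + r0 * cos t) (b + r0 * sin t) + sin t * gxy (a + r0 * cos t) (b + r0 * sin t))
                  + sin t * (cos t * gyx (a + r0 * cos t) (b + r0 * sin t) + sin t * gyy (a + r0 * cos t) (b + r0 * sin t))) 0 (2 * PI)).
Proof.
  intros S Hr0.
  apply (param_deriv (fun r t => cos t * gx (a + r * cos t) (b + r * sin t) + sin t * gy (a + r * cos t) (b + r * sin t))
     (fun r t => cos t * (cos t * gxx (a + r * cos t) (b + r * sin t) + sin t * gxy (a + r * cos t) (b + r * sin t))
                  + sin t * (cos t * gyx (a + r * cos t) (b + r * sin t) + sin t * gyy (a + r * cos t) (b + r * sin t)))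
     0 (2 * PI) r0 (a - Rabs r0)); [lra| | |].
  - intros r t Hr. assert (Ha := abs_tri r r0 _ a eq_refl Hr).
    apply (dcomb (fun u => gx (a + u * cos t) (b + u * sin t)) (fun u => gy (a + u * cos t) (b + u * sin t)));
      apply polar_dr; try apply S; exact Ha.
  - intros r t Hr. assert (Ha := abs_tri r r0 _ a eq_refl Hr).
    assert (Hp := polar_pos _ _ t Ha).
    repeat first [apply continuity_2d_pt_plus | apply continuity_2d_pt_mult
      | apply c2_of_2, continuity_cos | apply c2_of_2, continuity_sin
      | apply cont_polar; [apply S|exact Hp]].
  - intros r t Hr. assert (Ha := abs_tri r r0 _ a eq_refl Hr).
    apply (c2_slice2 (fun u v => cos v * gx (a + u * cos v) (b + u * sin v) + sin v * gy (a + u * cos v) (b + u * sin v))).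
    assert (Hp := polar_pos _ _ t Ha).
    repeat first [apply continuity_2d_pt_plus | apply continuity_2d_pt_mult
      | apply c2_of_2, continuity_cos | apply c2_of_2, continuity_sin
      | apply cont_polar; [apply S|exact Hp]].
Qed.

Lemma cpt_plus f g t : continuity_pt f t -> continuity_pt g t -> continuity_pt (fun s => f s + g s) t.
Proof. intros; apply continuity_pt_plus; assumption. Qed.
Lemma cpt_minus f g t : continuity_pt f t -> continuity_pt g t -> continuity_pt (fun s => f s - g s) t.
Proof. intros; apply continuity_pt_minus; assumption. Qed.
Lemma cpt_mult f g t : continuity_pt f t -> continuity_pt g t -> continuity_pt (fun s => f s * g s) t.
Proof. intros; apply continuity_pt_mult; assumption. Qed.
Lemma cpt_opp f t : continuity_pt f t -> continuity_pt (fun s => - f s) t.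
Proof. intros; apply continuity_pt_opp; assumption. Qed.
Lemma cpt_cos t : continuity_pt (fun s => cos s) t.
Proof. apply continuity_cos. Qed.
Lemma cpt_sin t : continuity_pt (fun s => sin s) t.
Proof. apply continuity_sin. Qed.
Lemma cpt_pow n t : continuity_pt (fun s => s ^ n) t.
Proof. apply derivable_continuous_pt, derivable_pt_pow. Qed.
Lemma cpt_id t : continuity_pt (fun s => s) t.
Proof. apply derivable_continuous_pt, derivable_pt_id. Qed.

Lemma cpt_polar h a b r t : cont_H h -> Rabs r < a ->
  continuity_pt (fun v => h (a + r * cos v) (b + r * sin v)) t.
Proof.
  intros H Hr. apply (c2_slice2 (fun u v => h (a + u * cos v) (b + u * sin v))).
  apply cont_polar; [exact H|apply polar_pos; exact Hr].
Qed.

Ltac cpt_tac Hs := repeat first [ (apply cpt_polar; [solve [apply Hs] | assumption]) | apply cpt_plus | apply cpt_minus | apply cpt_mult | apply cpt_opp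
  | apply cpt_cos | apply cpt_sin | apply cont_c | apply cpt_pow | apply cpt_id
  | (apply cpt_polar; [solve [apply Hs] | assumption]) ].

Lemma circ_id g gx gy gxx gxy gyx gyy a b r : C2H g gx gy gxx gxy gyx gyy -> Rabs r < a ->
  r ^ 2 * RInt (fun t => cos t * (cos t * gxx (a + r * cos t) (b + r * sin t) + sin t * gxy (a + r * cos t) (b + r * sin t))
                  + sin t * (cos t * gyx (a + r * cos t) (b + r * sin t) + sin t * gyy (a + r * cos t) (b + r * sin t))) 0 (2 * PI)
  + r * RInt (fun t => cos t * gx (a + r * cos t) (b + r * sin t) + sin t * gy (a + r * cos t) (b + r * sin t)) 0 (2 * PI)
  = RInt (fun t => r ^ 2 * (gxx (a + r * cos t) (b + r * sin t) + gyy (a + r * cos t) (b + r * sin t))) 0 (2 * PI).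
Proof.
  intros S Hr.
  set (W := fun t => cos t * (cos t * gxx (a + r * cos t) (b + r * sin t) + sin t * gxy (a + r * cos t) (b + r * sin t))
                  + sin t * (cos t * gyx (a + r * cos t) (b + r * sin t) + sin t * gyy (a + r * cos t) (b + r * sin t))).
  set (V := fun t => cos t * gx (a + r * cos t) (b + r * sin t) + sin t * gy (a + r * cos t) (b + r * sin t)).
  set (L := fun t => r ^ 2 * (gxx (a + r * cos t) (b + r * sin t) + gyy (a + r * cos t) (b + r * sin t))).
  set (h := fun t => L t - r ^ 2 * W t - r * V t).
  set (G := fun t => - r * sin t * gx (a + r * cos t) (b + r * sin t) + r * cos t * gy (a + r * cos t) (b + r * sin t)).
  assert (CW : forall t, continuity_pt W t) by (intro t; unfold W; cpt_tac S).
  assert (CV : forall t, continuity_pt V t) by (intro t; unfold V; cpt_tac S).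
  assert (CL : forall t, continuity_pt L t) by (intro t; unfold L; cpt_tac S).
  assert (Ch : forall t, continuity_pt h t) by (intro t; unfold h; cpt_tac S; auto).
  assert (Hpi : 0 < 2 * PI) by (generalize PI_RGT_0; lra).
  assert (Hh : RInt h 0 (2 * PI) = G (2 * PI) - G 0).
  { apply ftc_open; [exact Hpi| intro t; apply cpt_to_cont, Ch| |].
    - intros t _. unfold G. cpt_tac S.
    - intros t _. unfold G, h, L, W, V.
      eapply dlim_eq.
      + apply (derivable_pt_lim_plus (fun t => - r * sin t * gx (a + r * cos t) (b + r * sin t))
                                     (fun t => r * cos t * gy (a + r * cos t) (b + r * sin t))).
        * apply (derivable_pt_lim_mult (fun t => - r * sin t) (fun t => gx (a + r * cos t) (b + r * sin t))).
          -- apply is_derive_Reals. auto_derive. exact I. reflexivity.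
          -- apply polar_dt; try apply S; exact Hr.
        * apply (derivable_pt_lim_mult (fun t => r * cos t) (fun t => gy (a + r * cos t) (b + r * sin t))).
          -- apply is_derive_Reals. auto_derive. exact I. reflexivity.
          -- apply polar_dt; try apply S; exact Hr.
      + assert (E := sin2_cos2 t). unfold Rsqr in E.
        apply Rminus_diag_uniq.
        match goal with |- ?A - ?B = 0 => transitivity (r ^ 2 * (gxx (a + r * cos t) (b + r * sin t) + gyy (a + r * cos t) (b + r * sin t)) * (sin t * sin t + cos t * cos t - 1)) end.
        * ring.
        * rewrite E. ring. }
  assert (HG : G (2 * PI) = G 0).
  { unfold G. rewrite cos_2PI, sin_2PI, cos_0, sin_0. reflexivity. }
  rewrite HG, Rminus_diag in Hh.
  assert (Ex : forall f, (forall t, continuity_pt f t) -> ex_RInt f 0 (2 * PI)).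
  { intros f Hf. apply (@ex_RInt_continuous R_CompleteNormedModule). intros; apply cpt_to_cont, Hf. }
  assert (E1 : RInt L 0 (2 * PI) = RInt (fun t => h t + (r ^ 2 * W t + r * V t)) 0 (2 * PI)).
  { apply RInt_ext. intros t _. change (L t = h t + (r ^ 2 * W t + r * V t)). unfold h. ring. }
  fold W V L. rewrite E1.
  rewrite (RInt_plus h (fun t => r ^ 2 * W t + r * V t)); [| apply Ex, Ch | apply Ex; intro t; cpt_tac S; auto].
  rewrite (RInt_plus (fun t => r ^ 2 * W t) (fun t => r * V t)); [| apply Ex; intro t; cpt_tac S; auto | apply Ex; intro t; cpt_tac S; auto].
  rewrite (RInt_scal W), (RInt_scal V) by (apply Ex; auto).
  rewrite Hh. unfold plus, scal; simpl. unfold plus, mult; simpl. ring.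
Qed.

Definition W0 (x : R) := / sqrt x.

Lemma W0_pos x : 0 < x -> 0 < W0 x.
Proof. intros; apply Rinv_0_lt_compat, sqrt_lt_R0; assumption. Qed.

Lemma dW x : 0 < x -> derivable_pt_lim W0 x (- W0 x / (2 * x)).
Proof.
  intros Hx. unfold W0.
  assert (Hs : 0 < sqrt x) by (apply sqrt_lt_R0; exact Hx).
  assert (E := derivable_pt_lim_div (fun _ => 1) sqrt x 0 (/ (2 * sqrt x)) (derivable_pt_lim_const 1 x) (derivable_pt_lim_sqrt x Hx) ltac:(lra)).
  eapply dlim_eq; [eapply derivable_pt_lim_ext; [|exact E]|].
  - intro t. unfold div_fct. unfold Rdiv. ring.
  - unfold Rsqr. assert (Hxx : x = sqrt x * sqrt x) by (rewrite sqrt_sqrt; lra).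
    set (s := sqrt x) in *. clearbody s. rewrite Hxx. field. lra.
Qed.

Lemma dW' x : 0 < x -> derivable_pt_lim (fun t => - W0 t / (2 * t)) x (3 * W0 x / (4 * x ^ 2)).
Proof.
  intros Hx.
  assert (E := derivable_pt_lim_div (fun t => - W0 t) (fun t => 2 * t) x _ 2
    (derivable_pt_lim_opp _ _ _ (dW x Hx)) ltac:(apply is_derive_Reals; auto_derive; [exact I|ring]) ltac:(lra)).
  eapply dlim_eq; [eapply derivable_pt_lim_ext; [|exact E]|].
  - intro t. unfold div_fct. reflexivity.
  - unfold Rsqr. field. lra.
Qed.

Lemma cpt_W0 x : 0 < x -> continuity_pt W0 x.
Proof. intros Hx. apply derivable_continuous_pt. exists (- W0 x / (2 * x)). apply dW; exact Hx. Qed.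

Lemma contH_1 (w : R -> R) : (forall x, 0 < x -> continuity_pt w x) -> cont_H (fun x y => w x).
Proof. intros H x y Hx. apply cont_at2_iff. apply c2_of_1. apply H; exact Hx. Qed.

Lemma contH_Hbar h : cont_Hbar h -> cont_H h.
Proof. intros H x y Hx. apply cont_at2_iff. apply contHbar_int; assumption. Qed.

Lemma cpt_W0' x : 0 < x -> continuity_pt (fun t => - W0 t / (2 * t)) x.
Proof. intros Hx. apply derivable_continuous_pt. eexists. apply dW'; exact Hx. Qed.

Lemma cpt_W0'' x : 0 < x -> continuity_pt (fun t => 3 * W0 t / (4 * t ^ 2)) x.
Proof.
  intros Hx. apply continuity_pt_div.
  - apply continuity_pt_mult; [apply cont_c|apply cpt_W0; exact Hx].
  - apply continuity_pt_mult; [apply cont_c|apply cpt_pow].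
  - apply Rmult_integral_contrapositive; split; [lra|apply pow_nonzero; lra].
Qed.

Lemma pdy_mulc (f g : R -> R -> R) (w : R -> R) : pdy_H f g -> pdy_H (fun x y => f x y * w x) (fun x y => g x y * w x).
Proof.
  intros H x y Hx. assert (H1 := derivable_pt_lim_mult (fun t => f x t) (fun _ => w x) y (g x y) 0 (H x y Hx) (derivable_pt_lim_const _ _)).
  eapply dlim_eq; [eapply derivable_pt_lim_ext; [|exact H1]|]. intro; reflexivity. simpl. ring.
Qed.

Lemma pdx_mulw (f g : R -> R -> R) (w dw : R -> R) : pdx_H f g -> (forall x, 0 < x -> derivable_pt_lim w x (dw x)) ->
  pdx_H (fun x y => f x y * w x) (fun x y => g x y * w x + f x y * dw x).
Proof.
  intros H Hw x y Hx. assert (H1 := derivable_pt_lim_mult (fun t => f t y) w x (g x y) (dw x) (H x y Hx) (Hw x Hx)).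
  eapply dlim_eq; [eapply derivable_pt_lim_ext; [|exact H1]|]. intro; reflexivity. simpl. ring.
Qed.

Lemma pdx_plus (f1 f2 g1 g2 : R -> R -> R) : pdx_H f1 g1 -> pdx_H f2 g2 ->
  pdx_H (fun x y => f1 x y + f2 x y) (fun x y => g1 x y + g2 x y).
Proof. intros H1 H2 x y Hx. apply (derivable_pt_lim_plus (fun t => f1 t y) (fun t => f2 t y)); auto. Qed.

Lemma pdy_plus (f1 f2 g1 g2 : R -> R -> R) : pdy_H f1 g1 -> pdy_H f2 g2 ->
  pdy_H (fun x y => f1 x y + f2 x y) (fun x y => g1 x y + g2 x y).
Proof. intros H1 H2 x y Hx. apply (derivable_pt_lim_plus (fun t => f1 x t) (fun t => f2 x t)); auto. Qed.

Lemma pdx_ext (f g1 g2 : R -> R -> R) : pdx_H f g1 -> (forall x y, 0 < x -> g1 x y = g2 x y) -> pdx_H f g2.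
Proof. intros H E x y Hx. rewrite <- E by exact Hx. apply H, Hx. Qed.
Lemma pdy_ext (f g1 g2 : R -> R -> R) : pdy_H f g1 -> (forall x y, 0 < x -> g1 x y = g2 x y) -> pdy_H f g2.
Proof. intros H E x y Hx. rewrite <- E by exact Hx. apply H, Hx. Qed.



Lemma g_C2H phi px py pxx pxy pyx pyy : Setting phi px py pxx pxy pyx pyy ->
  C2H (fun x y => phi x y * W0 x)
      (fun x y => px x y * W0 x + phi x y * (- W0 x / (2 * x)))
      (fun x y => py x y * W0 x)
      (fun x y => pxx x y * W0 x + px x y * (- W0 x / (2 * x)) + (px x y * (- W0 x / (2 * x)) + phi x y * (3 * W0 x / (4 * x ^ 2))))
      (fun x y => pxy x y * W0 x + py x y * (- W0 x / (2 * x)))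
      (fun x y => pyx x y * W0 x + py x y * (- W0 x / (2 * x)))
      (fun x y => pyy x y * W0 x).
Proof.
  intros S. constructor.
  - apply pdx_mulw; [apply S|exact dW].
  - apply pdy_mulc, S.
  - apply (pdx_plus (fun x y => px x y * W0 x) (fun x y => phi x y * (- W0 x / (2 * x)))).
    + apply pdx_mulw; [apply S|exact dW].
    + apply (pdx_mulw phi px (fun x => - W0 x / (2 * x))); [apply S|exact dW'].
  - apply (pdy_plus (fun x y => px x y * W0 x) (fun x y => phi x y * (- W0 x / (2 * x)))).
    + apply pdy_mulc, S.
    + apply (pdy_mulc phi py (fun x => - W0 x / (2 * x))), S.
  - apply pdx_mulw; [apply S|exact dW].
  - apply pdy_mulc, S.
  - apply contH_mult; [apply contH_Hbar, S|apply contH_1, cpt_W0].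
  - apply contH_plus; apply contH_mult; try (apply contH_Hbar, S); apply contH_1; [apply cpt_W0|apply cpt_W0'].
  - apply contH_mult; [apply contH_Hbar, S|apply contH_1, cpt_W0].
  - repeat apply contH_plus; apply contH_mult; try (apply contH_Hbar, S); apply contH_1;
      first [apply cpt_W0'' | apply cpt_W0' | apply cpt_W0].
  - apply contH_plus; apply contH_mult; try (apply contH_Hbar, S); apply contH_1; [apply cpt_W0|apply cpt_W0'].
  - apply contH_plus; apply contH_mult; try (apply contH_Hbar, S); apply contH_1; [apply cpt_W0|apply cpt_W0'].
  - apply contH_mult; [apply contH_Hbar, S|apply contH_1, cpt_W0].
Qed.

Lemma dsq K u : derivable_pt_lim (fun u => K * u ^ 2) u (2 * K * u).
Proof. eapply dlim_eq; [apply derivable_pt_lim_scal; apply derivable_pt_lim_pow|]. simpl. ring. Qed.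

Lemma half_step phi px py pxx pxy pyx pyy : Setting phi px py pxx pxy pyx pyy ->
  forall a y0, 0 < a -> phi a y0 = 0 -> phi (a / 2) y0 = 0.
Proof.
  intros S a y0 Ha Hz.
  assert (CG := g_C2H _ _ _ _ _ _ _ S).
  set (gg := fun x y => phi x y * W0 x) in CG.
  set (gx := fun x y => px x y * W0 x + phi x y * (- W0 x / (2 * x))) in CG.
  set (gy := fun x y => py x y * W0 x) in CG.
  set (gxx := fun x y => pxx x y * W0 x + px x y * (- W0 x / (2 * x)) + (px x y * (- W0 x / (2 * x)) + phi x y * (3 * W0 x / (4 * x ^ 2)))) in CG.
  set (gxy := fun x y => pxy x y * W0 x + py x y * (- W0 x / (2 * x))) in CG.
  set (gyx := fun x y => pyx x y * W0 x + py x y * (- W0 x / (2 * x))) in CG.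
  set (gyy := fun x y => pyy x y * W0 x) in CG.
  assert (Lap : forall x y, 0 < x -> gxx x y + gyy x y = 3 / 4 * gg x y / x ^ 2).
  { intros x y Hx. unfold gxx, gyy, gg. generalize (s_pde _ _ _ _ _ _ _ S x y Hx). intro E.
    assert (E' : pyy x y = / x * px x y - pxx x y) by lra. rewrite E'. field. lra. }
  assert (gg_nn : forall x y, 0 < x -> 0 <= gg x y).
  { intros x y Hx. unfold gg. apply Rmult_le_pos; [apply (s_nonneg _ _ _ _ _ _ _ S); lra|apply Rlt_le, W0_pos; exact Hx]. }
  set (m := fun r => (RInt (fun t => gg (a + r * cos t) (y0 + r * sin t)) 0 (2 * PI) : R)).
  set (m1 := fun r => (RInt (fun t => cos t * gx (a + r * cos t) (y0 + r * sin t) + sin t * gy (a + r * cos t) (y0 + r * sin t)) 0 (2 * PI) : R)).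
  set (m2 := fun r => (RInt (fun t => cos t * (cos t * gxx (a + r * cos t) (y0 + r * sin t) + sin t * gxy (a + r * cos t) (y0 + r * sin t))
                  + sin t * (cos t * gyx (a + r * cos t) (y0 + r * sin t) + sin t * gyy (a + r * cos t) (y0 + r * sin t))) 0 (2 * PI) : R)).
  assert (D1 : forall r, Rabs r < a -> derivable_pt_lim m r (m1 r)).
  { intros r Hr. apply is_derive_Reals. apply (circ_d1 gg gx gy gxx gxy gyx gyy); assumption. }
  assert (D2 : forall r, Rabs r < a -> derivable_pt_lim m1 r (m2 r)).
  { intros r Hr. apply is_derive_Reals. apply (circ_d2 gg gx gy gxx gxy gyx gyy); assumption. }
  assert (Hpi : 0 < 2 * PI) by (generalize PI_RGT_0; lra).
  set (C := 3 / a ^ 2).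
  assert (HC : 0 < C) by (unfold C; apply Rdiv_lt_0_compat; [lra|apply pow_lt; lra]).
  assert (Hra : forall r, 0 <= r <= a / 2 -> Rabs r < a).
  { intros r Hr. rewrite Rabs_right by lra. lra. }
  assert (IN : forall r, 0 < r <= a / 2 -> r * m2 r + m1 r <= r * C * m r).
  { intros r Hr. assert (Hr' := Hra r ltac:(lra)).
    assert (ID := circ_id gg gx gy gxx gxy gyx gyy a y0 r CG Hr').
    fold (m1 r) (m2 r) in ID.
    assert (Ex : forall f, (forall t, continuity_pt f t) -> ex_RInt f 0 (2 * PI)).
    { intros f Hf. apply (@ex_RInt_continuous R_CompleteNormedModule). intros; apply cpt_to_cont, Hf. }
    assert (LE : RInt (fun t => r ^ 2 * (gxx (a + r * cos t) (y0 + r * sin t) + gyy (a + r * cos t) (y0 + r * sin t))) 0 (2 * PI)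
                 <= RInt (fun t => (r ^ 2 * C) * gg (a + r * cos t) (y0 + r * sin t)) 0 (2 * PI)).
    { apply RInt_le; [lra| apply Ex; intro t; cpt_tac CG | apply Ex; intro t; cpt_tac CG |].
      intros t _. assert (Hp := polar_pos a r t Hr').
      assert (Hx2 : a / 2 <= a + r * cos t).
      { generalize (COS_bound t). intros [Hc1 Hc2].
        assert (- r <= r * cos t) by (replace (- r) with (r * -1) by ring; apply Rmult_le_compat_l; lra). lra. }
      rewrite Lap by exact Hp.
      assert (G0 := gg_nn (a + r * cos t) (y0 + r * sin t) Hp).
      set (X := a + r * cos t) in *. set (Gv := gg X (y0 + r * sin t)) in *.
      assert (0 < X ^ 2) by (apply pow_lt; lra).
      assert (0 < a ^ 2) by (apply pow_lt; lra).
      assert (Hb : 3 / 4 / X ^ 2 <= 3 / a ^ 2).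
      { apply Rmult_le_reg_r with (X ^ 2 * a ^ 2); [apply Rmult_lt_0_compat; assumption|].
        replace (3 / 4 / X ^ 2 * (X ^ 2 * a ^ 2)) with (3 / 4 * a ^ 2) by (field; lra).
        replace (3 / a ^ 2 * (X ^ 2 * a ^ 2)) with (3 * X ^ 2) by (field; lra).
        assert (a * a <= 4 * (X * X)) by (apply Rle_trans with ((2 * X) * (2 * X)); [apply Rmult_le_compat; lra|lra]).
        simpl. lra. }
      replace (3 / 4 * Gv / X ^ 2) with (3 / 4 / X ^ 2 * Gv) by (field; lra).
      unfold C. rewrite Rmult_assoc. apply Rmult_le_compat_l; [apply pow2_ge_0|].
      apply Rmult_le_compat_r; [exact G0|exact Hb]. }
    assert (RS : RInt (fun t => (r ^ 2 * C) * gg (a + r * cos t) (y0 + r * sin t)) 0 (2 * PI) = r ^ 2 * C * m r).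
    { unfold m. exact (RInt_scal (fun t => gg (a + r * cos t) (y0 + r * sin t)) 0 (2 * PI) (r ^ 2 * C)
         ltac:(apply Ex; intro t; cpt_tac CG)). }
    rewrite RS in LE.
    rewrite <- ID in LE.
    assert (Hr2 : 0 < r) by lra.
    apply Rmult_le_reg_l with r; [exact Hr2|].
    replace (r * (r * m2 r + m1 r)) with (r ^ 2 * m2 r + r * m1 r) by ring.
    replace (r * (r * C * m r)) with (r ^ 2 * C * m r) by ring. lra. }
  assert (M0 : m 0 = 0).
  { unfold m. rewrite (RInt_ext _ (fun _ => gg a y0)).
    - rewrite RInt_const. unfold gg. rewrite Hz. unfold scal; simpl. unfold mult; simpl. ring.
    - intros t _. f_equal; ring. }
  assert (Cm : forall r, 0 <= r <= a / 2 -> continuity_pt m r).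
  { intros r Hr. apply derivable_continuous_pt. exists (m1 r). apply D1, Hra, Hr. }
  destruct (continuity_ab_maj m 0 (a / 2) ltac:(lra) Cm) as [Mx [HM HMx]].
  set (M := m Mx).
  assert (M_nn : 0 <= M) by (rewrite <- M0; apply HM; lra).
  assert (HMe : m Mx = M) by reflexivity.
  clearbody M m1 m2.
  assert (B1 : forall r, 0 < r <= a / 2 -> m1 r <= C * M * r / 2).
  { intros r Hr.
    assert (K := mono_nonincr (fun u => u * m1 u - C * M / 2 * u ^ 2) (fun u => m1 u + u * m2 u - C * M * u) 0 r ltac:(lra)).
    assert (Hd : forall u, 0 < u < r -> derivable_pt_lim (fun u => u * m1 u - C * M / 2 * u ^ 2) u (m1 u + u * m2 u - C * M * u)).
    { intros u Hu. eapply dlim_eq.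
      - apply (derivable_pt_lim_minus (fun u => u * m1 u) (fun u => C * M / 2 * u ^ 2)).
        + apply (derivable_pt_lim_mult (fun u => u) m1); [apply derivable_pt_lim_id|apply D2, Hra; lra].
        + apply dsq.
      - field. }
    lapply K; [clear K; intro K|exact Hd].
    lapply K; [clear K; intro K|].
    2:{ intros t Ht. apply derivable_continuous_pt. eexists. apply derivable_pt_lim_minus.
        - apply (derivable_pt_lim_mult (fun u => u) m1); [apply derivable_pt_lim_id|apply D2, Hra; lra].
        - apply dsq. }
    lapply K; [clear K; intro K|].
    2:{ intros u Hu. assert (I1 := IN u ltac:(lra)). assert (mu : m u <= M) by (rewrite <- HMe; apply HM; lra).
        assert (u * C * m u <= u * C * M) by (apply Rmult_le_compat_l; [apply Rmult_le_pos; lra|exact mu]). lra. }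
    assert (Hr2 : 0 < r) by lra.
    replace (0 * m1 0 - C * M / 2 * 0 ^ 2) with 0 in K by ring.
    assert (r * m1 r <= r * (C * M * r / 2)) by lra.
    apply Rmult_le_reg_l with r; [exact Hr2|exact H]. }
  assert (B2 : forall r, 0 <= r <= a / 2 -> m r <= C * M * r ^ 2 / 4).
  { intros r Hr. destruct (Rle_lt_or_eq_dec _ _ (proj1 Hr)) as [Hr0|<-].
    2:{ rewrite M0. replace (C * M * 0 ^ 2 / 4) with 0 by field. lra. }
    assert (K := mono_nonincr (fun u => m u - C * M / 4 * u ^ 2) (fun u => m1 u - C * M * u / 2) 0 r Hr0).
    lapply K; [clear K; intro K|].
    2:{ intros u Hu. eapply dlim_eq.
      - apply (derivable_pt_lim_minus m (fun u => C * M / 4 * u ^ 2)).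
        + apply D1, Hra; lra.
        + apply dsq.
      - field. }
    lapply K; [clear K; intro K|].
    2:{ intros t Ht. apply derivable_continuous_pt. eexists. apply derivable_pt_lim_minus.
        - apply D1, Hra; lra.
        - apply dsq. }
    lapply K; [clear K; intro K|].
    2:{ intros u Hu. assert (B := B1 u ltac:(lra)). lra. }
    rewrite M0 in K. lra. }
  assert (MM : M <= 0).
  { assert (B := B2 Mx HMx). rewrite HMe in B.
    assert (Mx ^ 2 <= (a / 2) ^ 2) by (apply pow_incr; lra).
    assert (C * M * Mx ^ 2 / 4 <= C * M * (a / 2) ^ 2 / 4).
    { apply Rmult_le_compat_r; [lra|]. apply Rmult_le_compat_l; [apply Rmult_le_pos; lra|exact H]. }
    replace (C * M * (a / 2) ^ 2 / 4) with (3 / 16 * M) in H0 by (unfold C; field; lra).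
    lra. }
  assert (Mh : m (a / 2) <= 0) by (apply Rle_trans with M; [rewrite <- HMe; apply HM; lra|exact MM]).
  destruct (Rle_lt_or_eq_dec _ _ (s_nonneg _ _ _ _ _ _ _ S (a / 2) y0 ltac:(lra))) as [Hp|Hp]; [|auto].
  exfalso.
  assert (Pos : 0 < m (a / 2)).
  { unfold m. apply (RInt_pos_pt _ 0 (2 * PI) PI).
    - generalize PI_RGT_0; lra.
    - intro t. apply cpt_to_cont. apply cpt_polar; [apply CG|apply Hra; lra].
    - intros t _. apply gg_nn, polar_pos, Hra; lra.
    - rewrite cos_PI, sin_PI. replace (a + a / 2 * -1) with (a / 2) by field.
      replace (y0 + a / 2 * 0) with y0 by ring. unfold gg. apply Rmult_lt_0_compat; [exact Hp|apply W0_pos; lra]. }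
  lra.
Qed.

Lemma int_prop phi px py pxx pxy pyx pyy : Setting phi px py pxx pxy pyx pyy ->
  forall a y, 0 < a -> Fdef phi pxx a y = 0 -> Fdef phi pxx 0 y = 0.
Proof.
  intros St a y Ha Hz.
  rewrite Fdef_pos in Hz by exact Ha.
  assert (Hp : phi a y = 0).
  { assert (0 < a ^ 2) by (apply pow_lt; lra).
    apply (Rmult_eq_compat_r (a ^ 2)) in Hz. field_simplify in Hz; lra. }
  assert (Hn : forall n, phi (a / 2 ^ n) y = 0).
  { induction n as [|n IH].
    - simpl. replace (a / 1) with a by field. exact Hp.
    - replace (a / 2 ^ S n) with (a / 2 ^ n / 2) by (simpl; field; apply pow_nonzero; lra).
      apply (half_step _ _ _ _ _ _ _ St); [|exact IH].
      apply Rdiv_lt_0_compat; [lra|apply pow_lt; lra]. }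
  apply Rabs_eq_0. apply Rle_antisym; [|apply Rabs_pos].
  apply le_epsilon. intros eps Heps. rewrite Rplus_0_l.
  destruct (F_cont _ _ _ _ _ _ _ St 0 y (Rle_refl _) eps Heps) as [d [Hd H1]].
  destruct (Pow_x_infinity 2 ltac:(rewrite Rabs_right; lra) (2 * a / d)) as [N HN].
  specialize (HN N (le_n _)). rewrite Rabs_right in HN by (apply Rle_ge, pow_le; lra).
  assert (H2N : 0 < 2 ^ N) by (apply pow_lt; lra).
  assert (Hsmall : a / 2 ^ N < d).
  { apply (Rmult_lt_reg_r (2 ^ N)); [exact H2N|].
    replace (a / 2 ^ N * 2 ^ N) with a by (field; lra).
    apply Rlt_le_trans with (d * (2 * a / d)); [|apply Rmult_le_compat_l; lra].
    replace (d * (2 * a / d)) with (2 * a) by (field; lra). lra. }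
  assert (Hpos : 0 < a / 2 ^ N) by (apply Rdiv_lt_0_compat; lra).
  assert (A := H1 (a / 2 ^ N) y ltac:(lra) ltac:(rewrite Rminus_0_r, Rabs_right; lra)
                ltac:(rewrite Rminus_diag, Rabs_R0; lra)).
  rewrite Fdef_pos, Hn in A by exact Hpos.
  replace (0 / (a / 2 ^ N) ^ 2 - Fdef phi pxx 0 y) with (- Fdef phi pxx 0 y) in A by (field; lra).
  rewrite Rabs_Ropp in A. lra.
Qed.

Definition sg (t : R) := Rabs (sin t).

Lemma sg_nn t : 0 <= sg t.
Proof. apply Rabs_pos. Qed.

Lemma sg_le1 t : sg t <= 1.
Proof. unfold sg. apply Rabs_le. apply SIN_bound. Qed.

Lemma cpt_sg t : continuity_pt sg t.
Proof.
  unfold sg. apply (continuity_pt_comp sin Rabs). apply continuity_sin. apply Rcontinuity_abs.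
Qed.

Lemma contHbar_comp2L h A B r t :
  cont_Hbar h -> continuity_2d_pt A r t -> continuity_2d_pt B r t ->
  locally_2d (fun u v => 0 <= A u v) r t ->
  continuity_2d_pt (fun u v => h (A u v) (B u v)) r t.
Proof.
  intros Hh HA HB [d0 Hpos] eps.
  assert (HA0 : 0 <= A r t) by (apply Hpos; rewrite Rminus_diag, Rabs_R0; apply cond_pos).
  destruct (Hh (A r t) (B r t) HA0 eps (cond_pos eps)) as [d [Hd H1]].
  destruct (HA (mkposreal d Hd)) as [d1 HA1].
  destruct (HB (mkposreal d Hd)) as [d2 HB1].
  exists (mkposreal _ (Rmin_pos _ _ (cond_pos d0) (Rmin_pos _ _ (cond_pos d1) (cond_pos d2)))).
  intros u v Hu Hv. simpl in Hu, Hv.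
  assert (u1 : Rabs (u - r) < d0) by (eapply Rlt_le_trans; [exact Hu|apply Rmin_l]).
  assert (v1 : Rabs (v - t) < d0) by (eapply Rlt_le_trans; [exact Hv|apply Rmin_l]).
  assert (u2 : Rabs (u - r) < d1) by (eapply Rlt_le_trans; [exact Hu|eapply Rle_trans; [apply Rmin_r|apply Rmin_l]]).
  assert (v2 : Rabs (v - t) < d1) by (eapply Rlt_le_trans; [exact Hv|eapply Rle_trans; [apply Rmin_r|apply Rmin_l]]).
  assert (u3 : Rabs (u - r) < d2) by (eapply Rlt_le_trans; [exact Hu|eapply Rle_trans; [apply Rmin_r|apply Rmin_r]]).
  assert (v3 : Rabs (v - t) < d2) by (eapply Rlt_le_trans; [exact Hv|eapply Rle_trans; [apply Rmin_r|apply Rmin_r]]).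
  apply H1; [apply Hpos; assumption|apply HA1; assumption|apply HB1; assumption].
Qed.

Lemma cont_As r t : continuity_2d_pt (fun u v => u * sg v) r t.
Proof. apply continuity_2d_pt_mult; [apply continuity_2d_pt_id1|apply c2_of_2, cpt_sg]. Qed.

Lemma cont_Bs y0 r t : continuity_2d_pt (fun u v => y0 + u * cos v) r t.
Proof.
  apply continuity_2d_pt_plus; [apply continuity_2d_pt_const|].
  apply continuity_2d_pt_mult; [apply continuity_2d_pt_id1|apply c2_of_2, continuity_cos].
Qed.

Lemma loc_pos r t : 0 < r -> locally_2d (fun u v => 0 <= u * sg v) r t.
Proof.
  intros Hr. exists (mkposreal r Hr). intros u v Hu Hv. simpl in Hu. apply Rabs_def2 in Hu.
  apply Rmult_le_pos; [lra|apply sg_nn].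
Qed.

Lemma cont_semi h y0 r t : cont_Hbar h -> 0 < r ->
  continuity_2d_pt (fun u v => h (u * sg v) (y0 + u * cos v)) r t.
Proof.
  intros H Hr. apply (contHbar_comp2L h (fun u v => u * sg v) (fun u v => y0 + u * cos v)); auto.
  - apply cont_As.
  - apply cont_Bs.
  - apply loc_pos; exact Hr.
Qed.

Lemma cpt_semi h y0 r t : cont_Hbar h -> 0 < r ->
  continuity_pt (fun v => h (r * sg v) (y0 + r * cos v)) t.
Proof.
  intros H Hr. apply (c2_slice2 (fun u v => h (u * sg v) (y0 + u * cos v))). apply cont_semi; assumption.
Qed.

Lemma semi_dr0 h hx hy y0 r t : pdx_H h hx -> pdy_H h hy -> cont_Hbar hx -> 0 < r -> 0 < sg t ->
  derivable_pt_lim (fun u => h (u * sg t) (y0 + u * cos t)) r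
    (sg t * hx (r * sg t) (y0 + r * cos t) + cos t * hy (r * sg t) (y0 + r * cos t)).
Proof.
  intros H1 H2 H3 Hr Hs. eapply dlim_eq.
  - apply (chain h hx hy (fun u => u * sg t) (fun u => y0 + u * cos t)); try assumption.
    + apply contH_Hbar; assumption.
    + apply Rmult_lt_0_compat; assumption.
    + apply (dlin 0 (sg t) r) || (eapply derivable_pt_lim_ext; [|apply (dlin 0 (sg t) r)]; intro; simpl; ring).
    + apply dlin.
  - ring.
Qed.

Lemma dmul_sg (f : R -> R) l r t : (0 < sg t -> derivable_pt_lim f r l) ->
  derivable_pt_lim (fun u => f u * sg t) r (l * sg t).
Proof.
  intros H. destruct (Rle_lt_or_eq_dec _ _ (sg_nn t)) as [Hp|Hz].
  - apply (derivable_pt_lim_mult f (fun _ => sg t) r l 0 (H Hp) (derivable_pt_lim_const _ _)) ||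
    (eapply dlim_eq; [eapply derivable_pt_lim_ext; [|apply (derivable_pt_lim_mult f (fun _ => sg t) r l 0 (H Hp) (derivable_pt_lim_const _ _))]|];
     [intro; unfold mult_fct; reflexivity|ring]).
  - rewrite <- Hz. eapply dlim_eq; [eapply derivable_pt_lim_ext; [|apply (derivable_pt_lim_const 0 r)]|].
    + intro u. unfold fct_cte. ring.
    + ring.
Qed.

Lemma semi_d1 phi px py pxx pxy pyx pyy y0 r0 : Setting phi px py pxx pxy pyx pyy -> 0 < r0 ->
  is_derive (fun r => RInt (fun t => phi (r * sg t) (y0 + r * cos t) * sg t) 0 PI) r0
    (RInt (fun t => (sg t * px (r0 * sg t) (y0 + r0 * cos t) + cos t * py (r0 * sg t) (y0 + r0 * cos t)) * sg t) 0 PI).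
Proof.
  intros S Hr0.
  apply (param_deriv (fun r t => phi (r * sg t) (y0 + r * cos t) * sg t)
    (fun r t => (sg t * px (r * sg t) (y0 + r * cos t) + cos t * py (r * sg t) (y0 + r * cos t)) * sg t) 0 PI r0 r0 Hr0).
  - intros r t Hr. assert (Hp : 0 < r) by (apply Rabs_def2 in Hr; lra).
    apply (dmul_sg (fun u => phi (u * sg t) (y0 + u * cos t))). intros Hs.
    apply semi_dr0; try apply S; assumption.
  - intros r t Hr. assert (Hp : 0 < r) by (apply Rabs_def2 in Hr; lra).
    repeat first [apply continuity_2d_pt_plus | apply continuity_2d_pt_mult
      | apply c2_of_2, continuity_cos | apply c2_of_2, cpt_sg
      | apply cont_semi; [apply S|exact Hp]].
  - intros r t Hr. assert (Hp : 0 < r) by (apply Rabs_def2 in Hr; lra).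
    apply (c2_slice2 (fun u v => phi (u * sg v) (y0 + u * cos v) * sg v)).
    apply continuity_2d_pt_mult; [apply cont_semi; [apply S|exact Hp]|apply c2_of_2, cpt_sg].
Qed.

Lemma semi_d2 phi px py pxx pxy pyx pyy y0 r0 : Setting phi px py pxx pxy pyx pyy -> 0 < r0 ->
  is_derive (fun r => RInt (fun t => (sg t * px (r * sg t) (y0 + r * cos t) + cos t * py (r * sg t) (y0 + r * cos t)) * sg t) 0 PI) r0
    (RInt (fun t => (sg t * (sg t * pxx (r0 * sg t) (y0 + r0 * cos t) + cos t * pxy (r0 * sg t) (y0 + r0 * cos t))
                   + cos t * (sg t * pyx (r0 * sg t) (y0 + r0 * cos t) + cos t * pyy (r0 * sg t) (y0 + r0 * cos t))) * sg t) 0 PI).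
Proof.
  intros S Hr0.
  apply (param_deriv (fun r t => (sg t * px (r * sg t) (y0 + r * cos t) + cos t * py (r * sg t) (y0 + r * cos t)) * sg t)
    (fun r t => (sg t * (sg t * pxx (r * sg t) (y0 + r * cos t) + cos t * pxy (r * sg t) (y0 + r * cos t))
                   + cos t * (sg t * pyx (r * sg t) (y0 + r * cos t) + cos t * pyy (r * sg t) (y0 + r * cos t))) * sg t) 0 PI r0 r0 Hr0).
  - intros r t Hr. assert (Hp : 0 < r) by (apply Rabs_def2 in Hr; lra).
    apply (dmul_sg (fun u => sg t * px (u * sg t) (y0 + u * cos t) + cos t * py (u * sg t) (y0 + u * cos t))). intros Hs.
    apply (dcomb (fun u => px (u * sg t) (y0 + u * cos t)) (fun u => py (u * sg t) (y0 + u * cos t)));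
      apply semi_dr0; try apply S; assumption.
  - intros r t Hr. assert (Hp : 0 < r) by (apply Rabs_def2 in Hr; lra).
    repeat first [apply continuity_2d_pt_plus | apply continuity_2d_pt_mult
      | apply c2_of_2, continuity_cos | apply c2_of_2, cpt_sg
      | apply cont_semi; [apply S|exact Hp]].
  - intros r t Hr. assert (Hp : 0 < r) by (apply Rabs_def2 in Hr; lra).
    apply (c2_slice2 (fun u v => (sg v * px (u * sg v) (y0 + u * cos v) + cos v * py (u * sg v) (y0 + u * cos v)) * sg v)).
    repeat first [apply continuity_2d_pt_plus | apply continuity_2d_pt_mult
      | apply c2_of_2, continuity_cos | apply c2_of_2, cpt_sg
      | apply cont_semi; [apply S|exact Hp]].
Qed.

Lemma sg_sin t : 0 < t < PI -> sg t = sin t.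
Proof. intros H. unfold sg. apply Rabs_right. apply Rle_ge, Rlt_le, sin_gt_0; lra. Qed.

Lemma dsin_r r t : derivable_pt_lim (fun v => r * sin v) t (r * cos t).
Proof. apply is_derive_Reals. auto_derive; [exact I|ring]. Qed.

Lemma semi_dt h hx hy y0 r t : pdx_H h hx -> pdy_H h hy -> cont_Hbar hx -> 0 < r -> 0 < t < PI ->
  derivable_pt_lim (fun v => h (r * sin v) (y0 + r * cos v)) t
    (r * cos t * hx (r * sin t) (y0 + r * cos t) - r * sin t * hy (r * sin t) (y0 + r * cos t)).
Proof.
  intros H1 H2 H3 Hr Ht. eapply dlim_eq.
  - apply (chain h hx hy (fun v => r * sin v) (fun v => y0 + r * cos v)); try assumption.
    + apply contH_Hbar; assumption.
    + apply Rmult_lt_0_compat; [exact Hr|apply sin_gt_0; lra].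
    + apply dsin_r.
    + apply dcos_lin.
  - ring.
Qed.

Lemma semi_id phi px py pxx pxy pyx pyy y0 r : Setting phi px py pxx pxy pyx pyy -> 0 < r ->
  r ^ 2 * RInt (fun t => (sg t * (sg t * pxx (r * sg t) (y0 + r * cos t) + cos t * pxy (r * sg t) (y0 + r * cos t))
                   + cos t * (sg t * pyx (r * sg t) (y0 + r * cos t) + cos t * pyy (r * sg t) (y0 + r * cos t))) * sg t) 0 PI
  - 2 * RInt (fun t => phi (r * sg t) (y0 + r * cos t) * sg t) 0 PI = 0.
Proof.
  intros S Hr.
  set (W := fun t => (sg t * (sg t * pxx (r * sg t) (y0 + r * cos t) + cos t * pxy (r * sg t) (y0 + r * cos t))
                   + cos t * (sg t * pyx (r * sg t) (y0 + r * cos t) + cos t * pyy (r * sg t) (y0 + r * cos t))) * sg t).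
  set (U := fun t => phi (r * sg t) (y0 + r * cos t) * sg t).
  set (h := fun t => r ^ 2 * W t - 2 * U t).
  set (G := fun t => - r * sg t * cos t * px (r * sg t) (y0 + r * cos t) + r * sg t ^ 2 * py (r * sg t) (y0 + r * cos t)
                     + 2 * cos t * phi (r * sg t) (y0 + r * cos t)).
  assert (CW : forall t, continuity_pt W t).
  { intro t. unfold W. repeat first [apply cpt_plus | apply cpt_mult | apply cpt_cos | apply cpt_sg
       | apply cpt_semi; [apply S|exact Hr]]. }
  assert (CU : forall t, continuity_pt U t).
  { intro t. unfold U. repeat first [apply cpt_plus | apply cpt_mult | apply cpt_cos | apply cpt_sg
       | apply cpt_semi; [apply S|exact Hr]]. }
  assert (Ch : forall t, continuity_pt h t).
  { intro t. unfold h. apply cpt_minus; apply cpt_mult; try apply cont_c; auto. }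
  assert (Hh : RInt h 0 PI = G PI - G 0).
  { apply ftc_open; [apply PI_RGT_0| intro t; apply cpt_to_cont, Ch| |].
    - intros t _. unfold G. repeat first [apply cpt_plus | apply cpt_mult | apply cpt_opp | apply cpt_cos | apply cpt_sg
       | apply cont_c | apply cpt_pow | apply (cpt_semi px); [apply S|exact Hr]
       | apply (cpt_semi py); [apply S|exact Hr] | apply (cpt_semi phi); [apply S|exact Hr]].
    - intros t Ht.
      apply (derivable_pt_lim_locally_ext
        (fun v => - r * sin v * cos v * px (r * sin v) (y0 + r * cos v) + r * sin v ^ 2 * py (r * sin v) (y0 + r * cos v)
                     + 2 * cos v * phi (r * sin v) (y0 + r * cos v)) G t 0 PI _ Ht).
      { intros z Hz. unfold G. rewrite sg_sin by exact Hz. reflexivity. }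
      eapply dlim_eq.
      + apply (derivable_pt_lim_plus
          (fun v => - r * sin v * cos v * px (r * sin v) (y0 + r * cos v) + r * sin v ^ 2 * py (r * sin v) (y0 + r * cos v))
          (fun v => 2 * cos v * phi (r * sin v) (y0 + r * cos v))).
        * apply (derivable_pt_lim_plus
            (fun v => - r * sin v * cos v * px (r * sin v) (y0 + r * cos v))
            (fun v => r * sin v ^ 2 * py (r * sin v) (y0 + r * cos v))).
          -- apply (derivable_pt_lim_mult (fun v => - r * sin v * cos v) (fun v => px (r * sin v) (y0 + r * cos v))).
             ++ apply is_derive_Reals. auto_derive; [exact I|reflexivity].
             ++ apply semi_dt; try apply S; assumption.
          -- apply (derivable_pt_lim_mult (fun v => r * sin v ^ 2) (fun v => py (r * sin v) (y0 + r * cos v))).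
             ++ apply is_derive_Reals. auto_derive; [exact I|reflexivity].
             ++ apply semi_dt; try apply S; assumption.
        * apply (derivable_pt_lim_mult (fun v => 2 * cos v) (fun v => phi (r * sin v) (y0 + r * cos v))).
          ++ apply is_derive_Reals. auto_derive; [exact I|reflexivity].
          ++ apply semi_dt; try apply S; assumption.
      + unfold h, W, U. rewrite sg_sin by exact Ht.
        assert (Hs : 0 < sin t) by (apply sin_gt_0; lra).
        assert (Hx : 0 < r * sin t) by (apply Rmult_lt_0_compat; [exact Hr|exact Hs]).
        assert (PDE := s_pde _ _ _ _ _ _ _ S (r * sin t) (y0 + r * cos t) Hx).
        assert (PF : r * sin t * (pxx (r * sin t) (y0 + r * cos t) + pyy (r * sin t) (y0 + r * cos t))
                     = px (r * sin t) (y0 + r * cos t)).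
        { apply (Rmult_eq_compat_l (r * sin t)) in PDE. rewrite Rmult_0_r in PDE.
          replace (r * sin t * (pxx (r * sin t) (y0 + r * cos t) + pyy (r * sin t) (y0 + r * cos t) -
                   / (r * sin t) * px (r * sin t) (y0 + r * cos t)))
            with (r * sin t * (pxx (r * sin t) (y0 + r * cos t) + pyy (r * sin t) (y0 + r * cos t)) -
                   px (r * sin t) (y0 + r * cos t)) in PDE by (field; split; lra).
          lra. }
        apply Rminus_diag_uniq.
        transitivity (r * (cos t ^ 2 + sin t ^ 2) * (px (r * sin t) (y0 + r * cos t) -
             r * sin t * (pxx (r * sin t) (y0 + r * cos t) + pyy (r * sin t) (y0 + r * cos t)))).
        * simpl. ring.
        * rewrite PF. ring. }
  assert (G0 : G 0 = 0).
  { unfold G, sg. rewrite sin_0, cos_0, Rabs_R0. replace (r * 0) with 0 by ring. rewrite (s_bdry _ _ _ _ _ _ _ S). ring. }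
  assert (GP : G PI = 0).
  { unfold G, sg. rewrite sin_PI, cos_PI, Rabs_R0. replace (r * 0) with 0 by ring. rewrite (s_bdry _ _ _ _ _ _ _ S). ring. }
  rewrite G0, GP, Rminus_0_r in Hh.
  assert (Ex : forall f, (forall t, continuity_pt f t) -> ex_RInt f 0 PI).
  { intros f Hf. apply (@ex_RInt_continuous R_CompleteNormedModule). intros; apply cpt_to_cont, Hf. }
  fold W U.
  assert (E : RInt h 0 PI = r ^ 2 * RInt W 0 PI - 2 * RInt U 0 PI).
  { unfold h.
    rewrite (RInt_minus (fun t => r ^ 2 * W t) (fun t => 2 * U t)) by (apply Ex; intro t; apply cpt_mult; auto; apply cont_c).
    rewrite (RInt_scal W), (RInt_scal U) by (apply Ex; auto).
    unfold minus, plus, opp, scal; simpl. unfold mult; simpl. ring. }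
  rewrite <- E. exact Hh.
Qed.

Lemma const_pos (k : R -> R) : (forall t, 0 < t -> derivable_pt_lim k t 0) -> forall r, 0 < r -> k r = k 1.
Proof.
  intros H r Hr.
  assert (Cont : forall t, 0 < t -> continuity_pt k t) by (intros t Ht; apply derivable_continuous_pt; exists 0; apply H; exact Ht).
  assert (Gen : forall a b, 0 < a < b -> k b = k a).
  { intros a b Hab. apply Rle_antisym.
    - apply (mono_nonincr k (fun _ => 0) a b); try lra.
      + intros t Ht; apply H; lra.
      + intros t Ht; apply Cont; lra.
      + intros; lra.
    - assert (HH := mono_nonincr (fun t => - k t) (fun _ => - 0) a b ltac:(lra)).
      assert (- k b <= - k a); [|lra].
      apply HH.
      + intros t Ht. apply (derivable_pt_lim_opp k). apply H; lra.
      + intros t Ht. apply continuity_pt_opp, Cont; lra.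
      + intros; lra. }
  destruct (Rtotal_order r 1) as [Hl|[He|Hg]].
  - symmetry. apply Gen; lra.
  - subst; reflexivity.
  - apply Gen; lra.
Qed.

Lemma ode_zero (N N1 N2 : R -> R) :
  (forall r, 0 < r -> derivable_pt_lim N r (N1 r)) ->
  (forall r, 0 < r -> derivable_pt_lim N1 r (N2 r)) ->
  (forall r, 0 < r -> r ^ 2 * N2 r - 2 * N r = 0) ->
  (forall r, 0 < r -> 0 <= N r) ->
  (forall eps, 0 < eps -> exists d, 0 < d /\ forall r, 0 < r < d -> N r <= eps * r ^ 2) ->
  forall r, 0 < r -> N r = 0.
Proof.
  intros D1 D2 E Hnn Hsm.
  set (w := fun r => r ^ 2 * N1 r - 2 * r * N r).
  assert (Dw : forall r, 0 < r -> derivable_pt_lim w r 0).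
  { intros r Hr. unfold w. eapply dlim_eq.
    - apply (derivable_pt_lim_minus (fun r => r ^ 2 * N1 r) (fun r => 2 * r * N r)).
      + apply (derivable_pt_lim_mult (fun r => r ^ 2) N1); [apply derivable_pt_lim_pow|apply D2; exact Hr].
      + apply (derivable_pt_lim_mult (fun r => 2 * r) N); [|apply D1; exact Hr].
        apply is_derive_Reals. auto_derive; [exact I|reflexivity].
    - generalize (E r Hr). simpl. intro. lra. }
  assert (Wc := const_pos w Dw). set (k := w 1) in Wc.
  set (z := fun r => N r / r ^ 2 + k / 3 / r ^ 3).
  assert (Dz : forall r, 0 < r -> derivable_pt_lim z r 0).
  { intros r Hr. unfold z. eapply dlim_eq.
    - apply (derivable_pt_lim_plus (fun r => N r / r ^ 2) (fun r => k / 3 / r ^ 3)).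
      + apply (dquot N (N1 r) r 2); [apply D1|]; exact Hr.
      + apply (dquot (fun _ => k / 3) 0 r 3); [apply derivable_pt_lim_const|exact Hr].
    - generalize (Wc r Hr). unfold w. intro Wr. rewrite <- Wr. simpl. field. lra. }
  assert (Zc := const_pos z Dz). set (Z := z 1) in Zc.
  assert (Hv : forall r, 0 < r -> N r / r ^ 2 = Z - k / 3 / r ^ 3).
  { intros r Hr. rewrite <- (Zc r Hr). unfold z. ring. }
  destruct (Hsm 1 Rlt_0_1) as [d [Hd Hd1]].
  assert (Hk : k = 0).
  { destruct (Req_dec k 0) as [|Hk]; [assumption|exfalso].
    set (AZ := Rabs Z + 1).
    assert (HAZ : 0 < AZ) by (unfold AZ; generalize (Rabs_pos Z); lra).
    set (r := Rmin (Rmin (d / 2) 1) (Rabs k / (6 * AZ))).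
    assert (Hk0 : 0 < Rabs k) by (apply Rabs_pos_lt; exact Hk).
    assert (Hr : 0 < r) by (unfold r; repeat apply Rmin_pos; try lra; apply Rdiv_lt_0_compat; lra).
    assert (Hr1 : r <= 1) by (unfold r; generalize (Rmin_l (Rmin (d / 2) 1) (Rabs k / (6 * AZ))) (Rmin_r (d / 2) 1); lra).
    assert (Hr2 : r < d) by (unfold r; generalize (Rmin_l (Rmin (d / 2) 1) (Rabs k / (6 * AZ))) (Rmin_l (d / 2) 1); lra).
    assert (Hr3 : r <= Rabs k / (6 * AZ)) by (unfold r; apply Rmin_r).
    assert (Hr2' : 0 < r ^ 2) by (apply pow_lt; lra).
    assert (Hr3' : 0 < r ^ 3) by (apply pow_lt; lra).
    assert (B1 : N r / r ^ 2 <= 1).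
    { apply (Rmult_le_reg_r (r ^ 2)); [exact Hr2'|]. replace (N r / r ^ 2 * r ^ 2) with (N r) by (field; lra).
      rewrite Rmult_1_l. replace (r ^ 2) with (1 * r ^ 2) by ring. apply Hd1. lra. }
    assert (B0 : 0 <= N r / r ^ 2) by (apply Rmult_le_pos; [apply Hnn; lra|apply Rlt_le, Rinv_0_lt_compat; exact Hr2']).
    rewrite Hv in B0, B1 by exact Hr.
    assert (Bk : Rabs (k / 3 / r ^ 3) <= AZ).
    { unfold AZ. apply Rabs_le. generalize (Rle_abs Z) (Rabs_maj2 Z). lra. }
    rewrite Rabs_div in Bk by lra. rewrite Rabs_div in Bk by lra.
    rewrite (Rabs_right 3) in Bk by lra. rewrite (Rabs_right (r ^ 3)) in Bk by lra.
    assert (Rabs k <= 3 * r ^ 3 * AZ).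
    { apply (Rmult_le_compat_r (3 * r ^ 3)) in Bk; [|lra].
      replace (Rabs k / 3 / r ^ 3 * (3 * r ^ 3)) with (Rabs k) in Bk by (field; lra). lra. }
    assert (r ^ 3 <= r).
    { simpl. assert (r * r <= 1) by (apply Rle_trans with (1 * 1); [apply Rmult_le_compat; lra|lra]).
      assert (r * (r * r) <= r * 1) by (apply Rmult_le_compat_l; lra). lra. }
    assert (3 * r ^ 3 * AZ <= 3 * r * AZ) by (apply Rmult_le_compat_r; lra).
    assert (3 * r * AZ <= Rabs k / 2).
    { apply (Rmult_le_compat_r (3 * AZ)) in Hr3; [|lra].
      replace (Rabs k / (6 * AZ) * (3 * AZ)) with (Rabs k / 2) in Hr3 by (field; lra). lra. }
    lra. }
  rewrite Hk in Hv.
  assert (HZ : Z <= 0).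
  { apply le_epsilon. intros eps Heps. rewrite Rplus_0_l.
    destruct (Hsm eps Heps) as [d' [Hd' Hd1']].
    set (r := Rmin d' 1 / 2).
    assert (Hr : 0 < r) by (unfold r; apply Rdiv_lt_0_compat; [apply Rmin_pos|]; lra).
    assert (Hr2 : r < d') by (unfold r; generalize (Rmin_l d' 1); lra).
    assert (Hr2' : 0 < r ^ 2) by (apply pow_lt; lra).
    assert (B := Hd1' r ltac:(lra)).
    assert (E1 := Hv r Hr). replace (Z - 0 / 3 / r ^ 3) with Z in E1 by (field; lra).
    rewrite <- E1. apply (Rmult_le_reg_r (r ^ 2)); [exact Hr2'|].
    replace (N r / r ^ 2 * r ^ 2) with (N r) by (field; lra). exact B. }
  intros r Hr.
  assert (E1 := Hv r Hr). replace (Z - 0 / 3 / r ^ 3) with Z in E1 by (field; lra).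
  assert (Hr2' : 0 < r ^ 2) by (apply pow_lt; lra).
  assert (0 <= N r / r ^ 2) by (apply Rmult_le_pos; [apply Hnn; lra|apply Rlt_le, Rinv_0_lt_compat; exact Hr2']).
  assert (N r / r ^ 2 = 0) by lra.
  replace (N r) with (N r / r ^ 2 * r ^ 2) by (field; lra). rewrite H0. ring.
Qed.

Lemma bdry_zero phi px py pxx pxy pyx pyy : Setting phi px py pxx pxy pyx pyy ->
  forall y0, Fdef phi pxx 0 y0 = 0 -> forall x1 y1, 0 < x1 -> phi x1 y1 = 0.
Proof.
  intros S y0 Hz x1 y1 Hx1.
  set (N := fun r => (RInt (fun t => phi (r * sg t) (y0 + r * cos t) * sg t) 0 PI : R)).
  set (N1 := fun r => (RInt (fun t => (sg t * px (r * sg t) (y0 + r * cos t) + cos t * py (r * sg t) (y0 + r * cos t)) * sg t) 0 PI : R)).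
  set (N2 := fun r => (RInt (fun t => (sg t * (sg t * pxx (r * sg t) (y0 + r * cos t) + cos t * pxy (r * sg t) (y0 + r * cos t))
                   + cos t * (sg t * pyx (r * sg t) (y0 + r * cos t) + cos t * pyy (r * sg t) (y0 + r * cos t))) * sg t) 0 PI : R)).
  assert (CU : forall r t, 0 < r -> continuity_pt (fun t => phi (r * sg t) (y0 + r * cos t) * sg t) t).
  { intros r t Hr. apply cpt_mult; [apply cpt_semi; [apply S|exact Hr]|apply cpt_sg]. }
  assert (Ex : forall r, 0 < r -> ex_RInt (fun t => phi (r * sg t) (y0 + r * cos t) * sg t) 0 PI).
  { intros r Hr. apply (@ex_RInt_continuous R_CompleteNormedModule). intros; apply cpt_to_cont, CU; exact Hr. }
  assert (Unn : forall r t, 0 < r -> 0 <= phi (r * sg t) (y0 + r * cos t) * sg t).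
  { intros r t Hr. apply Rmult_le_pos; [|apply sg_nn]. apply (s_nonneg _ _ _ _ _ _ _ S).
    apply Rmult_le_pos; [lra|apply sg_nn]. }
  assert (HN : forall r, 0 < r -> N r = 0).
  { apply (ode_zero N N1 N2).
    - intros r Hr. apply is_derive_Reals. apply (semi_d1 _ _ _ _ _ _ _ y0 r S Hr).
    - intros r Hr. apply is_derive_Reals. apply (semi_d2 _ _ _ _ _ _ _ y0 r S Hr).
    - intros r Hr. apply (semi_id _ _ _ _ _ _ _ y0 r S Hr).
    - intros r Hr. unfold N. apply RInt_ge_0; [apply Rlt_le, PI_RGT_0|apply Ex; exact Hr|].
      intros; apply Unn; exact Hr.
    - intros eps Heps.
      assert (Hpi := PI_RGT_0).
      destruct (F_cont _ _ _ _ _ _ _ S 0 y0 (Rle_refl _) (eps / PI)) as [d [Hd H1]];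
        [apply Rdiv_lt_0_compat; lra|].
      exists d. split; [exact Hd|]. intros r Hr.
      apply Rle_trans with (RInt (fun _ => eps / PI * r ^ 2) 0 PI).
      + apply RInt_le; [lra|apply Ex; lra|apply (@ex_RInt_const R_CompleteNormedModule)|].
        intros t Ht.
        destruct (Rle_lt_or_eq_dec _ _ (sg_nn t)) as [Hs|Hs].
        * assert (Hx : 0 < r * sg t) by (apply Rmult_lt_0_compat; lra).
          assert (A := H1 (r * sg t) (y0 + r * cos t) ltac:(lra)).
          rewrite Hz, Rminus_0_r, Fdef_pos in A by exact Hx.
          lapply A; [clear A; intro A|].
          2:{ try rewrite Rminus_0_r. rewrite Rabs_right by lra. generalize (sg_le1 t).
              intro. apply Rle_lt_trans with r; [|lra]. rewrite <- (Rmult_1_r r) at 2. apply Rmult_le_compat_l; lra. }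
          lapply A; [clear A; intro A|].
          2:{ replace (y0 + r * cos t - y0) with (r * cos t) by ring. rewrite Rabs_mult, (Rabs_right r) by lra.
              generalize (COS_bound t). intro Hc. apply Rle_lt_trans with r; [|lra].
              rewrite <- (Rmult_1_r r) at 2. apply Rmult_le_compat_l; [lra|]. apply Rabs_le; lra. }
          apply Rabs_def2 in A. destruct A as [A _]. rewrite ?Rminus_0_r in A.
          assert (Hx2 : 0 < (r * sg t) ^ 2) by (apply pow_lt; exact Hx).
          assert (P1 : phi (r * sg t) (y0 + r * cos t) <= eps / PI * (r * sg t) ^ 2).
          { apply (Rmult_lt_compat_r ((r * sg t) ^ 2)) in A; [|exact Hx2].
            replace (phi (r * sg t) (y0 + r * cos t) / (r * sg t) ^ 2 * (r * sg t) ^ 2)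
              with (phi (r * sg t) (y0 + r * cos t)) in A by (field; lra). lra. }
          generalize (sg_le1 t). intro Hs1.
          assert (P2 : phi (r * sg t) (y0 + r * cos t) * sg t <= eps / PI * (r * sg t) ^ 2 * sg t)
            by (apply Rmult_le_compat_r; [apply sg_nn|exact P1]).
          apply Rle_trans with (1 := P2).
          replace (eps / PI * (r * sg t) ^ 2 * sg t) with ((eps / PI * r ^ 2) * (sg t * sg t * sg t)) by ring.
          rewrite <- (Rmult_1_r (eps / PI * r ^ 2)) at 2.
          apply Rmult_le_compat_l.
          { apply Rmult_le_pos; [apply Rlt_le, Rdiv_lt_0_compat; lra|apply pow2_ge_0]. }
          assert (sg t * sg t <= 1) by (apply Rle_trans with (1 * 1); [apply Rmult_le_compat; lra|lra]).
          apply Rle_trans with (1 * sg t); [apply Rmult_le_compat_r; lra|lra].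
        * rewrite <- Hs. rewrite Rmult_0_r. apply Rmult_le_pos; [apply Rlt_le, Rdiv_lt_0_compat; lra|apply pow2_ge_0].
      + rewrite RInt_const. unfold scal; simpl. unfold mult; simpl. right. field. lra. }
  set (z := (y1 - y0) / x1).
  assert (Hq : 0 < 1 + z²) by (generalize (Rle_0_sqr z); lra).
  assert (Hsq : 0 < sqrt (1 + z²)) by (apply sqrt_lt_R0; exact Hq).
  set (t := PI / 2 - atan z).
  set (r := x1 * sqrt (1 + z²)).
  assert (Hr : 0 < r) by (unfold r; apply Rmult_lt_0_compat; assumption).
  assert (Ht : 0 < t < PI) by (unfold t; generalize (atan_bound z); lra).
  assert (St : sin t = 1 / sqrt (1 + z²)) by (unfold t; rewrite sin_shift, cos_atan; reflexivity).
  assert (Ct : cos t = z / sqrt (1 + z²)) by (unfold t; rewrite cos_shift, sin_atan; reflexivity).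
  assert (Sgt : sg t = 1 / sqrt (1 + z²)) by (rewrite sg_sin by exact Ht; exact St).
  assert (X1 : r * sg t = x1) by (rewrite Sgt; unfold r; field; lra).
  assert (Y1 : y0 + r * cos t = y1).
  { rewrite Ct; unfold r. replace (x1 * sqrt (1 + z²) * (z / sqrt (1 + z²))) with (x1 * z) by (field; lra). unfold z; field; lra. }
  destruct (Rle_lt_or_eq_dec _ _ (s_nonneg _ _ _ _ _ _ _ S x1 y1 ltac:(lra))) as [Hp|Hp]; [|auto].
  exfalso.
  assert (Pos : 0 < N r).
  { unfold N. apply (RInt_pos_pt _ 0 PI t Ht).
    - intro s. apply cpt_to_cont, CU; exact Hr.
    - intros s _. apply Unn; exact Hr.
    - rewrite X1, Y1. apply Rmult_lt_0_compat; [exact Hp|]. rewrite Sgt. apply Rdiv_lt_0_compat; lra. }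
  rewrite (HN r Hr) in Pos. lra.
Qed.

Lemma bdry_pos phi px py pxx pxy pyx pyy : Setting phi px py pxx pxy pyx pyy ->
  (exists x y, 0 < x /\ phi x y <> 0) -> forall y, 0 < Fdef phi pxx 0 y.
Proof.
  intros S [x1 [y1 [Hx1 Hn]]] y.
  destruct (Rle_lt_or_eq_dec _ _ (F_nonneg _ _ _ _ _ _ _ S 0 y (Rle_refl _))) as [H|H]; [exact H|].
  exfalso. apply Hn. apply (bdry_zero _ _ _ _ _ _ _ S y (eq_sym H)); exact Hx1.
Qed.

Theorem lemma4p1 (phi : R -> R -> R)
  (Hreg2 : C2_Hbar phi)
  (Hsmooth : Cinf_H phi)
  (Hnonneg : forall x y, 0 <= x -> 0 <= phi x y)
  (Hnonzero : exists x y, 0 <= x /\ phi x y <> 0)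
  (Hbdry : forall y, phi 0 y = 0)
  (Hpde : exists px py pxx pyy,
      pdx_H phi px /\ pdy_H phi py /\ pdx_H px pxx /\ pdy_H py pyy /\
      forall x y, 0 < x -> pxx x y + pyy x y - / x * px x y = 0) :
  exists f : R -> R -> R,
    (forall x y, 0 < x -> f x y = phi x y / x ^ 2) /\
    cont_Hbar f /\ Cinf_H f /\
    (exists fx fy fxx fyy,
      pdx_H f fx /\ pdy_H f fy /\ pdx_H fx fxx /\ pdy_H fy fyy /\
      forall x y, 0 < x -> fxx x y + fyy x y + 3 / x * fx x y = 0) /\
    (forall x y, 0 <= x -> 0 < f x y).
Proof.
  destruct Hreg2 as [Hc [fx [fy [fxx [fxy [fyx [fyy HH]]]]]]].
  destruct HH as (D1 & D2 & D3 & D4 & D5 & D6 & C1 & C2 & C3 & C4 & C5 & C6).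
  destruct Hpde as (px & py & pxx & pyy & P1 & P2 & P3 & P4 & P5).
  assert (S : Setting phi fx fy fxx fxy fyx fyy).
  { constructor; try assumption.
    intros x y Hx.
    assert (E1 : forall u v, 0 < u -> px u v = fx u v).
    { intros u v Hu. eapply uniqueness_limite; [apply P1|apply D1]; exact Hu. }
    assert (E2 : forall u v, 0 < u -> py u v = fy u v).
    { intros u v Hu. eapply uniqueness_limite; [apply P2|apply D2]; exact Hu. }
    assert (E3 : pxx x y = fxx x y).
    { eapply uniqueness_limite; [|apply D3; exact Hx].
      eapply pdx_loc_ext; [exact Hx|exact E1|apply P3; exact Hx]. }
    assert (E4 : pyy x y = fyy x y).
    { eapply uniqueness_limite; [|apply D6; exact Hx].
      eapply pdy_loc_ext; [exact Hx|exact E2|apply P4; exact Hx]. }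
    rewrite <- E3, <- E4, <- E1 by exact Hx. apply P5; exact Hx. }
  exists (Fdef phi fxx). repeat split.
  - intros x y Hx. apply Fdef_pos; exact Hx.
  - apply (F_cont _ _ _ _ _ _ _ S).
  - apply F_Cinf; exact Hsmooth.
  - apply (F_pde _ _ _ _ _ _ _ S).
  - assert (NZ : exists x y, 0 < x /\ phi x y <> 0).
    { destruct Hnonzero as [x [y [Hx Hn]]]. exists x, y. split; [|exact Hn].
      destruct (Rle_lt_or_eq_dec _ _ Hx) as [|<-]; [assumption|]. rewrite Hbdry in Hn. lra. }
    assert (BP := bdry_pos _ _ _ _ _ _ _ S NZ).
    intros x y Hx. destruct (Rle_lt_or_eq_dec _ _ Hx) as [Hx'|<-]; [|apply BP].
    generalize (F_nonneg _ _ _ _ _ _ _ S x y Hx). intro H0.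
    destruct (Rle_lt_or_eq_dec _ _ H0) as [|E]; [assumption|].
    exfalso. generalize (int_prop _ _ _ _ _ _ _ S x y Hx' (eq_sym E)). generalize (BP y). lra.
Qed.
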